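(* For all $\theta,\hat\theta\in\Theta$, $k\in\mathbb N_+$, $\mu\in\mathcal M$, $T\ge2$, and the observation sequence $\{s_t,a_t\}_{t\in\mathbb Z}$ of any $\omega\in\Omega$: (1) for all $t\in[1:T]$, $$\|\gamma^\theta_{\mu,t|T}-\gamma^{\hat\theta}_{k,t}\|_{TV}\le\Big(1-\frac{\epsilon_b^2\zeta}{|\mathcal O|}\Big)^{t-1}+\Big(1-\frac{\epsilon_b^2\zeta}{|\mathcal O|}\Big)^{T-t}+\frac{2|\mathcal O|z_{\theta,\hat\theta}L_{\theta,\|\hat\theta-\theta\|_2}}{\epsilon_b^2\zeta}\|\hat\theta-\theta\|_2;$$ (2) for all $t\in[2:T]$, $$\|\tilde\gamma^\theta_{\mu,t|T}-\tilde\gamma^{\hat\theta}_{k,t}\|_{TV}\le2\Big(1-\frac{\epsilon_b^2\zeta}{|\mathcal O|}\Big)^{t-2}+\Big(1-\frac{\epsilon_b^2\zeta}{|\mathcal O|}\Big)^{T-t}+\frac{4|\mathcal O|z_{\theta,\hat\theta}L_{\theta,\|\hat\theta-\theta\|_2}}{\epsilon_b^2\zeta}\|\hat\theta-\theta\|_2.$$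
   Context: $\mathcal S,\mathcal A,\mathcal O$ are finite sets; $\Theta=\Theta_{hi}\times\Theta_{lo}\times\Theta_b$ is a convex compact subset of a Euclidean space. There are policies $\pi_{hi}(o\mid s;\theta_{hi})$ (distribution on $\mathcal O$), $\pi_{lo}(a\mid s,o;\theta_{lo})$ (distribution on $\mathcal A$), $\pi_b(b\mid s,o';\theta_b)$ (distribution on $\{0,1\}$), and environment kernel $P(s'\mid s,a)$. For fixed $\zeta\in(0,1)$, $\bar\pi_{hi}(o_t\mid s_t,o_{t-1},b_t;\theta_{hi})$ equals $\pi_{hi}(o_t\mid s_t;\theta_{hi})$ if $b_t=1$, $1-\zeta+\zeta/|\mathcal O|$ if $b_t=0,o_t=o_{t-1}$, $\zeta/|\mathcal O|$ if $b_t=0,o_t\ne o_{t-1}$. The options-with-failure process with parameter $\theta$: given $O_{t-1},S_t$, draw $B_t\sim\pi_b(\cdot\mid S_t,O_{t-1};\theta_b)$, $O_t\sim\bar\pi_{hi}(\cdot\mid S_t,O_{t-1},B_t;\theta_{hi})$, $A_t\sim\pi_{lo}(\cdot\mid S_t,O_t;\theta_{lo})$, $S_{t+1}\sim P(\cdot\mid S_t,A_t)$; $\mathbb P_{\theta,o_0,s_1}$ is the law of $(S_{2:T},A_{1:T},O_{1:T},B_{1:T})$ given $(O_0,S_1)=(o_0,s_1)$. Standing assumptions: (i) on an open $\tilde\Theta\supseteq\Theta$ the policies are defined, strictly positive and continuously differentiable in $\theta$; (ii) for a true parameter $\theta^*$, $\{(O_{t-1},S_t)\}_{t\ge1}$ is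 a Markov chain and $\nu^*$ is an extreme point of its set of stationary distributions. $\mathcal X=\mathcal S\times\mathcal A\times\mathcal O\times\{0,1\}$, $\Omega=\{\omega\in\mathcal X^{\mathbb Z}:P(\omega(s_{t+1})\mid\omega(s_t),\omega(a_t))>0\ \forall t\}$, $s_t=\omega(s_t),a_t=\omega(a_t)$. $\mathcal M$ = set of conditional pmfs $\mu(\cdot\mid s_1)$ on $\mathcal O$. Smoothing distributions (pmfs on $\mathcal O\times\{0,1\}$): $\gamma^\theta_{\mu,t|T}(o_t,b_t)\propto\mathbb E_{O_0\sim\mu(\cdot\mid s_1)}[\mathbb P_{\theta,O_0,s_1}(S_{2:T}=s_{2:T},A_{1:T}=a_{1:T},O_t=o_t,B_t=b_t)]$, $\tilde\gamma^\theta_{\mu,t|T}(o_{t-1},b_t)\propto\mathbb E_{O_0\sim\mu(\cdot\mid s_1)}[\mathbb P_{\theta,O_0,s_1}(S_{2:T}=s_{2:T},A_{1:T}=a_{1:T},O_{t-1}=o_{t-1},B_t=b_t)]$. For $k\in\mathbb N_+$, $\mathbb P_{\theta,k}$ is the law of the process with parameter $\theta$ over times $1-k,\dots,T+k$ with $(O_{-k},S_{1-k})\sim\nu^*$, and $\gamma^\theta_{k,t}(o_t,b_t)\propto\mathbb P_{\theta,k}(S_{1-k:T+k}=s_{1-k:T+k},A_{1-k:T+k}=a_{1-k:T+k},O_t=o_t,B_t=b_t)$, $\tilde\gamma^\theta_{k,t}(o_{t-1},b_t)\propto\mathbb P_{\theta,k}(S_{1-k:T+k}=s_{1-k:T+k},A_{1-k:T+k}=a_{1-k:T+k},O_{t-1}=o_{t-1},B_t=b_t)$.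 Constants: $\epsilon_b>0$ is a constant for which there is a conditional distribution $\bar\pi_{o,b}(o_t,b_t\mid s_t;\theta)$ on $\mathcal O\times\{0,1\}$ with $0<\epsilon_b\zeta\bar\pi_{o,b}(o_t,b_t\mid s_t;\theta)\le\pi_b(b_t\mid s_t,o_{t-1};\theta_b)\bar\pi_{hi}(o_t\mid s_t,o_{t-1},b_t;\theta_{hi})\le\epsilon_b^{-1}|\mathcal O|\bar\pi_{o,b}(o_t,b_t\mid s_t;\theta)$ for all $\theta\in\Theta$ and all arguments. With $h(\theta;o_{t-1},s_t,a_t,o_t,b_t)=\pi_b(b_t\mid s_t,o_{t-1};\theta_b)\bar\pi_{hi}(o_t\mid s_t,o_{t-1},b_t;\theta_{hi})\pi_{lo}(a_t\mid s_t,o_t;\theta_{lo})$: $L_{\theta,\delta}$ is the smallest $L$ such that for all arguments $\tilde\theta\mapsto h(\tilde\theta;\cdot)$ is $L$-Lipschitz on $\{\tilde\theta\in\Theta:\|\tilde\theta-\theta\|_2\le\delta\}$; and $z_{\theta,\hat\theta}=\max_{s',a'}\frac{[\max_{o,o',b}h(\theta;o,s',a',o',b)]\vee[\max_{o,o',b}h(\hat\theta;o,s',a',o',b)]}{[\min_{o,o',b}h(\theta;o,s',a',o',b)][\min_{o,o',b}h(\hat\theta;o,s',a',o',b)]}$. $\|\nu_1-\nu_2\|_{TV}=\frac12\sum|\nu_1-\nu_2|$. *)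

(* Defs.v *)
From HB Require Import structures.
From mathcomp Require Import all_boot all_order all_algebra.
From mathcomp Require Import all_classical all_reals all_analysis.
Set Implicit Arguments. Unset Strict Implicit. Unset Printing Implicit Defensive.
Import Order.TTheory GRing.Theory Num.Theory.
Import numFieldNormedType.Exports.
Local Open Scope classical_set_scope.
Local Open Scope ring_scope.

Section OptionsWithFailure.
Variables (R : realType) (S A O : finType) (nh nl nb : nat).

Definition param := ('rV[R]_nh * 'rV[R]_nl * 'rV[R]_nb)%type.
Definition th_hi (th : param) := th.1.1.
Definition th_lo (th : param) := th.1.2.
Definition th_b (th : param) := th.2.

Definition dist2 (th th' : param) : R :=
  Num.sqrt (\sum_(i < nh) (th.1.1 0 i - th'.1.1 0 i) ^+ 2
          + \sum_(i < nl) (th.1.2 0 i - th'.1.2 0 i) ^+ 2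
          + \sum_(i < nb) (th.2 0 i - th'.2 0 i) ^+ 2).

(* pihi th s o = pi_hi(o | s; th);  pilo th s o a = pi_lo(a | s,o; th);
   pib th s o' b = pi_b(b | s,o'; th);  P s a s' = P(s' | s,a) *)
Variables (pihi : 'rV[R]_nh -> S -> O -> R) (pilo : 'rV[R]_nl -> S -> O -> A -> R)
          (pib : 'rV[R]_nb -> S -> O -> bool -> R) (P : S -> A -> S -> R) (zeta : R).

Definition pibar_hi (thh : 'rV[R]_nh) (s : S) (oprev : O) (b : bool) (o : O) : R :=
  if b then pihi thh s o
  else if o == oprev then 1 - zeta + zeta / #|O|%:R else zeta / #|O|%:R.

Definition hfun (th : param) (oprev : O) (s : S) (a : A) (o : O) (b : bool) : R :=
  pib (th_b th) s oprev b * pibar_hi (th_hi th) s oprev b o * pilo (th_lo th) s o a.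

(* Unnormalised joint weight of a latent path over N steps at times t0,...,t0+N-1:
   o : index j <-> O_{t0-1+j} (j = 0..N);  b : index j <-> B_{t0+j} (j = 0..N-1);
   init o_{t0-1} is the (unnormalised) initial law of O_{t0-1} together with S_{t0}. *)
Definition wpath (th : param) (init : O -> R) (t0 : int) (N : nat)
  (s : int -> S) (a : int -> A) (o : {ffun 'I_N.+1 -> O}) (b : {ffun 'I_N -> bool}) : R :=
  init (o ord0)
  * (\prod_(j < N) hfun th (o (inord j)) (s (t0 + (j : nat)%:Z)) (a (t0 + (j : nat)%:Z))
                          (o (inord j.+1)) (b j))
  * (\prod_(j < N.-1) P (s (t0 + (j : nat)%:Z)) (a (t0 + (j : nat)%:Z))
                          (s (t0 + (j : nat)%:Z + 1))).

(* conditional law of (O_t, B_t) given the observations *)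
Definition smooth (th : param) (init : O -> R) (t0 : int) (N : nat)
  (s : int -> S) (a : int -> A) (t : int) (o' : O) (b' : bool) : R :=
  (\sum_(ob : {ffun 'I_N.+1 -> O} * {ffun 'I_N -> bool} |
          [forall j : 'I_N, (t0 + (j : nat)%:Z == t) ==>
                 ((ob.1 (inord j.+1) == o') && (ob.2 j == b'))])
      wpath th init t0 s a ob.1 ob.2)
  / (\sum_(ob : {ffun 'I_N.+1 -> O} * {ffun 'I_N -> bool}) wpath th init t0 s a ob.1 ob.2).

(* conditional law of (O_{t-1}, B_t) given the observations *)
Definition smooth_tilde (th : param) (init : O -> R) (t0 : int) (N : nat)
  (s : int -> S) (a : int -> A) (t : int) (o' : O) (b' : bool) : R :=
  (\sum_(ob : {ffun 'I_N.+1 -> O} * {ffun 'I_N -> bool} |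
          [forall j : 'I_N, (t0 + (j : nat)%:Z == t) ==>
                 ((ob.1 (inord j) == o') && (ob.2 j == b'))])
      wpath th init t0 s a ob.1 ob.2)
  / (\sum_(ob : {ffun 'I_N.+1 -> O} * {ffun 'I_N -> bool}) wpath th init t0 s a ob.1 ob.2).

(* gamma^th_{mu,t|T} and tilde version: times 1..T, O_0 ~ mu(. | s_1) *)
Definition gamma_mu (th : param) (mu : S -> O -> R) (T : nat) s a (t : int) :=
  smooth th (mu (s 1)) 1 T s a t.
Definition gammat_mu (th : param) (mu : S -> O -> R) (T : nat) s a (t : int) :=
  smooth_tilde th (mu (s 1)) 1 T s a t.

(* gamma^th_{k,t} and tilde version: times 1-k..T+k, (O_{-k}, S_{1-k}) ~ nu *)
Definition gamma_k (th : param) (nu : O -> S -> R) (k T : nat) s a (t : int) :=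
  smooth th (fun o => nu o (s (1 - k%:Z))) (1 - k%:Z) (T + 2 * k) s a t.
Definition gammat_k (th : param) (nu : O -> S -> R) (k T : nat) s a (t : int) :=
  smooth_tilde th (fun o => nu o (s (1 - k%:Z))) (1 - k%:Z) (T + 2 * k) s a t.

Definition tv (f g : O -> bool -> R) : R :=
  2^-1 * \sum_(x : O * bool) `|f x.1 x.2 - g x.1 x.2|.

Definition hmax (th : param) (s : S) (a : A) : R :=
  \big[Num.max/0]_(x : O * O * bool) hfun th x.1.1 s a x.1.2 x.2.
Definition hmin (th : param) (s : S) (a : A) : R :=
  \big[Num.min/hmax th s a]_(x : O * O * bool) hfun th x.1.1 s a x.1.2 x.2.

Definition zconst (th th' : param) : R :=
  \big[Num.max/0]_(x : S * A)
     (Num.max (hmax th x.1 x.2) (hmax th' x.1 x.2) / (hmin th x.1 x.2 * hmin th' x.1 x.2)).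

Variables (Th : set 'rV[R]_nh) (Tl : set 'rV[R]_nl) (Tb : set 'rV[R]_nb).
Definition inTheta (th : param) := Th th.1.1 /\ Tl th.1.2 /\ Tb th.2.

Definition lip_on (th : param) (d L : R) :=
  0 <= L /\
  forall (oprev : O) (s : S) (a : A) (o : O) (b : bool) (x y : param),
    inTheta x -> inTheta y -> dist2 x th <= d -> dist2 y th <= d ->
    `|hfun x oprev s a o b - hfun y oprev s a o b| <= L * dist2 x y.

Definition is_L_const (th : param) (d L : R) :=
  lip_on th d L /\ forall L', lip_on th d L' -> L <= L'.

Definition chain_kernel (th : param) (x y : O * S) : R :=
  \sum_(b : bool) \sum_(a : A) hfun th x.1 x.2 a y.1 b * P x.2 a y.2.

Definition stationary (th : param) (nu : O -> S -> R) :=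
  (forall o s, 0 <= nu o s) /\ \sum_(x : O * S) nu x.1 x.2 = 1 /\
  forall y : O * S, \sum_(x : O * S) nu x.1 x.2 * chain_kernel th x y = nu y.1 y.2.

Definition extreme_stationary (th : param) (nu : O -> S -> R) :=
  stationary th nu /\
  forall nu1 nu2 (l : R), stationary th nu1 -> stationary th nu2 -> 0 < l < 1 ->
    (forall o s, nu o s = l * nu1 o s + (1 - l) * nu2 o s) -> nu1 = nu2.

End OptionsWithFailure.

Definition C1_on (R : realType) (n : nat) (U : set 'rV[R]_n) (f : 'rV[R]_n -> R) :=
  forall i : 'I_n,
    (forall x, U x -> derivable f x (delta_mx 0 i)) /\
    (forall x, U x -> {for x, continuous (fun y => derive f y (delta_mx 0 i))}).

Definition convex_rv (R : realType) (n : nat) (C : set 'rV[R]_n) :=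
  forall x y (l : R), C x -> C y -> 0 <= l <= 1 -> C (l *: x + (1 - l) *: y).

(* Main.v *)
Require Import Defs.
From HB Require Import structures.
From mathcomp Require Import all_boot all_order all_algebra.
From mathcomp Require Import all_classical all_reals all_analysis.
From mathcomp Require Import ring lra zify.
Set Implicit Arguments. Unset Strict Implicit. Unset Printing Implicit Defensive.
Import Order.TTheory GRing.Theory Num.Theory.
Local Open Scope ring_scope.
Section Gen1.
Variable R : realFieldType.

Lemma sum_pos_mul (I : finType) (f g : I -> R) :
  (forall i, 0 <= f i) -> 0 < \sum_i f i -> (forall i, 0 < g i) ->
  0 < \sum_i f i * g i.
Proof.
move=> f0 sf g0.
case: (pickP (fun i => 0 < f i)) => [i fi|H].
  rewrite (bigD1 i) //=.
  have h1 : 0 <= \sum_(j | j != i) f j * g j.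
    by apply: sumr_ge0 => j _; rewrite mulr_ge0 // ltW.
  have h2 : 0 < f i * g i by rewrite mulr_gt0.
  lra.
have : \sum_i f i = 0.
  apply: big1 => i _; have := f0 i; have := H i => /= /negbT; rewrite -leNgt => h h'.
  by apply/eqP; rewrite eq_le h h'.
by move=> e; rewrite e ltxx in sf.
Qed.

Lemma ADW (A B : finType) (f f' : A -> R) (V : A -> B -> R) (r : A -> R) (nu : B -> R) (c : R) :
  (forall a, r a = \sum_b V a b) ->
  (forall a, 0 < r a) ->
  (forall a b, c * r a * nu b <= V a b) ->
  0 < \sum_a f a * r a -> 0 < \sum_a f' a * r a ->
  \sum_b `| (\sum_a f a * V a b) / (\sum_a f a * r a)
           - (\sum_a f' a * V a b) / (\sum_a f' a * r a) |
  <= (1 - c * \sum_b nu b) *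
     \sum_a `| f a * r a / (\sum_a f a * r a)
             - f' a * r a / (\sum_a f' a * r a)|.
Proof.
move=> Hr rpos Hmin Zp Z'p.
set Z := \sum_a f a * r a.
set Z' := \sum_a f' a * r a.
set D := fun a => f a * r a / Z - f' a * r a / Z'.
have rn0 : forall a, r a != 0 by move=> a; rewrite gt_eqF.
have HD0 : \sum_a D a = 0.
  rewrite /D sumrB -!mulr_suml -/Z -/Z' !divff ?subrr //; by rewrite gt_eqF.
set Q := fun a b => V a b / r a - c * nu b.
have Q0 : forall a b, 0 <= Q a b.
  move=> a b; rewrite /Q subr_ge0 ler_pdivlMr //.
  by rewrite mulrAC.
have key : forall b, (\sum_a f a * V a b) / Z - (\sum_a f' a * V a b) / Z'
                  = \sum_a D a * Q a b.
  move=> b.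
  have -> : \sum_a D a * Q a b = \sum_a D a * (V a b / r a) - (\sum_a D a) * (c * nu b).
    by rewrite mulr_suml -sumrB; apply: eq_bigr => a _; rewrite /Q mulrBr.
  rewrite HD0 mul0r subr0 !mulr_suml -sumrB; apply: eq_bigr => a _.
  rewrite /D; field; by rewrite rn0 /= gt_eqF // gt_eqF.
have QS : forall a, \sum_b Q a b = 1 - c * \sum_b nu b.
  move=> a; rewrite /Q sumrB -mulr_suml -Hr divff // mulr_sumr //.
under eq_bigr do rewrite key.
apply: (le_trans (ler_sum _ (fun b _ => ler_norm_sum _ _ _))).
rewrite exchange_big /= mulrC mulr_suml; apply: ler_sum => a _.
under eq_bigr do rewrite normrM (ger0_norm (Q0 _ _)).
by rewrite -mulr_sumr QS.
Qed.

Lemma ratio_tv (I : finType) (w w' : I -> R) (rho kap : R) :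
  (forall i, 0 <= w i) -> 0 < \sum_i w i -> 0 < kap ->
  (forall i, `|w' i - w i| <= rho * w i) -> (forall i, kap * w i <= w' i) ->
  \sum_i `|w i / (\sum_j w j) - w' i / (\sum_j w' j)| <= 2 * rho / kap.
Proof.
move=> w0 Wp kp Hr Hk.
set W := \sum_j w j. set W' := \sum_j w' j.
have W'k : kap * W <= W' by rewrite /W mulr_sumr; apply: ler_sum => i _.
have W'p : 0 < W' by apply: lt_le_trans W'k; rewrite mulr_gt0.
have rho0 : 0 <= rho.
  case: (pickP (fun i => 0 < w i)) => [i wi|H].
    have := Hr i; have := normr_ge0 (w' i - w i) => h1 h2.
    have : 0 <= rho * w i by apply: le_trans h2.
    by rewrite pmulr_lge0.
  have : W = 0.
    apply: big1 => i _; have := w0 i; have := H i => /= /negbT; rewrite -leNgt => h h'.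
    by apply/eqP; rewrite eq_le h h'.
  by move=> e; move: Wp; rewrite -/W e ltxx.
have step1 : forall i, `|w i / W - w' i / W'| <= 2 * rho * w i / W'.
  move=> i.
  have -> : w i / W - w' i / W' = (\sum_j (w i * (w' j - w j) - (w' i - w i) * w j)) / (W * W').
    rewrite sumrB -!mulr_sumr sumrB -/W -/W'.
    field; by rewrite !gt_eqF.
  rewrite normrM (@gtr0_norm _ (W * W')^-1); last by rewrite invr_gt0 mulr_gt0 // -/W; apply: Wp.
  rewrite ler_pdivrMr ?mulr_gt0 //.
  apply: (le_trans (ler_norm_sum _ _ _)).
  have -> : 2 * rho * w i / W' * (W * W') = \sum_j (2 * rho * w i * w j).
    rewrite -mulr_sumr -/W; field; by rewrite gt_eqF.
  apply: ler_sum => j _.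
  apply: (le_trans (ler_normB _ _)).
  rewrite !normrM (ger0_norm (w0 i)) (ger0_norm (w0 j)).
  have := Hr i; have := Hr j => hj hi.
  have a1 : w i * `|w' j - w j| <= w i * (rho * w j) by apply: ler_wpM2l.
  have a2 : `|w' i - w i| * w j <= (rho * w i) * w j by apply: ler_wpM2r.
  lra.
apply: (le_trans (ler_sum _ (fun i _ => step1 i))).
rewrite -mulr_suml -mulr_sumr -/W.
rewrite ler_pdivrMr //.
have h : W <= W' / kap by rewrite ler_pdivlMr // mulrC.
have -> : 2 * rho / kap * W' = (2 * rho) * (W' / kap) by rewrite mulrAC -mulrA.
by apply: ler_wpM2l; first by rewrite mulr_ge0.
Qed.

Lemma geom_le (x : R) (n : nat) : 0 <= x < 1 -> (1 - x) * \sum_(i < n) x ^+ i <= 1.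
Proof.
move=> /andP[x0 x1].
have := subrX1 x n.
have : 0 <= x ^+ n by rewrite exprn_ge0.
move=> h e.
have -> : (1 - x) * \sum_(i < n) x ^+ i = 1 - x ^+ n.
  by rewrite -opprB mulNr -e opprB.
lra.
Qed.

End Gen1.

Section Gen1b.
Variable R : realFieldType.
Lemma geom_le' (x : R) (n : nat) : 0 <= x < 1 -> \sum_(i < n) x ^+ i <= 1 / (1 - x).
Proof.
move=> hx; have := geom_le n hx; case/andP: hx => x0 x1.
by rewrite ler_pdivlMr ?subr_gt0 // mulrC.
Qed.

Lemma gsum (x : R) (n i : nat) : 0 <= x < 1 -> (i < n)%N ->
  \sum_(m < n) (if (m <= i)%N then x ^+ (i - m) else x ^+ (m - i.+1)) <= 2 / (1 - x).
Proof.
move=> hx iT.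
rewrite -(big_mkord xpredT (fun m => if (m <= i)%N then x ^+ (i - m) else x ^+ (m - i.+1))).
rewrite (big_cat_nat _ (n := i.+1)) //=.
have e1 : \sum_(0 <= m < i.+1) (if (m <= i)%N then x ^+ (i - m) else x ^+ (m - i.+1))
        = \sum_(0 <= m < i.+1) x ^+ m.
  rewrite (eq_big_nat _ _ (F2 := fun m => x ^+ (i - m))); last first.
    by move=> m /andP[_ mi]; rewrite ltnS in mi; rewrite mi.
  rewrite big_nat_rev /=; apply: eq_big_nat => m /andP[_ mi].
  by rewrite add0n subSS subKn.
have e2 : \sum_(i.+1 <= m < n) (if (m <= i)%N then x ^+ (i - m) else x ^+ (m - i.+1))
        = \sum_(0 <= m < n - i.+1) x ^+ m.
  rewrite -{1}[i.+1]add0n big_addn; apply: eq_big_nat => m _.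
  by rewrite ifF ?addnK // addnS ltnNge leq_addl.
rewrite e1 e2 !big_mkord.
have := geom_le' i.+1 hx; have := geom_le' (n - i.+1) hx.
have -> : 2 / (1 - x) = 1 / (1 - x) + 1 / (1 - x) by rewrite -mulrDl.
move=> h1 h2; exact: lerD.
Qed.
End Gen1b.


Section Gen2.
Variables (R : realFieldType) (O : finType).

Definition kern := int -> O -> O -> bool -> R.
Definition step (G : kern) (t : int) (f : O -> R) : O -> R :=
  fun y => \sum_x \sum_b f x * G t x y b.
Fixpoint fw (G : kern) (f : O -> R) (t0 : int) (n : nat) : O -> R :=
  match n with 0 => f | n'.+1 => fw G (step G t0 f) (t0 + 1) n' end.
Fixpoint bwv (G : kern) (v : O -> R) (t1 : int) (n : nat) : O -> R :=
  match n with 0 => v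
  | n'.+1 => fun x => \sum_y \sum_b G t1 x y b * bwv G v (t1 + 1) n' y end.

Lemma addS_int (t : int) (m : nat) : t + 1 + m%:Z = t + (m.+1)%:Z.
Proof. by rewrite intS addrA. Qed.

Lemma fw_split G f t0 m n : fw G f t0 (m + n) = fw G (fw G f t0 m) (t0 + m%:Z) n.
Proof.
elim: m f t0 => [|m IH] f t0 /=; first by rewrite addr0.
by rewrite IH addS_int.
Qed.

Lemma bw_split G v t m n : bwv G v t (m + n) = bwv G (bwv G v (t + m%:Z) n) t m.
Proof.
elim: m t => [|m IH] t /=; first by rewrite addr0.
by rewrite IH addS_int.
Qed.

Lemma fw_bw G f v t m n :
  \sum_x fw G f t m x * bwv G v (t + m%:Z) n x = \sum_x f x * bwv G v t (m + n) x.
Proof.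
elim: m f t => [|m IH] f t /=; first by rewrite addr0.
rewrite -addS_int IH /step.
transitivity (\sum_y \sum_x \sum_b f x * G t x y b * bwv G v (t+1) (m+n) y).
  apply: eq_bigr => y _; rewrite mulr_suml; apply: eq_bigr => x _; by rewrite mulr_suml.
rewrite exchange_big; apply: eq_bigr => x _; rewrite mulr_sumr; apply: eq_bigr => y _.
rewrite mulr_sumr; apply: eq_bigr => b _; by rewrite mulrA.
Qed.

Lemma fw_congr G G' f t0 n :
  (forall k, (k < n)%N -> G (t0 + k%:Z) = G' (t0 + k%:Z)) -> fw G f t0 n = fw G' f t0 n.
Proof.
elim: n f t0 => [|n IH] f t0 H //=.
have e0 : G t0 = G' t0 by have := H 0%N erefl; rewrite addr0.
rewrite /step e0 IH // => k kn.
by rewrite addS_int; apply: H.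
Qed.

Lemma bwv_congr G G' v t n :
  (forall k, (k < n)%N -> G (t + k%:Z) = G' (t + k%:Z)) -> bwv G v t n = bwv G' v t n.
Proof.
elim: n t => [|n IH] t H //=.
have e0 : G t = G' t by have := H 0%N erefl; rewrite addr0.
rewrite e0 IH // => k kn.
by rewrite addS_int; apply: H.
Qed.

Definition Gpos (G : kern) := forall t x y b, 0 < G t x y b.

Lemma step_gt0 G t f y : Gpos G -> (forall x, 0 <= f x) -> 0 < \sum_x f x ->
  0 < step G t f y.
Proof.
move=> Gp f0 fp; rewrite /step.
under eq_bigr do rewrite -mulr_sumr.
apply: sum_pos_mul => // x.
rewrite big_bool /=.
have h1 := Gp t x y true; have h2 := Gp t x y false; lra.
Qed.

Lemma step_ge0 G t f y : Gpos G -> (forall x, 0 <= f x) -> 0 <= step G t f y.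
Proof.
move=> Gp f0; apply: sumr_ge0 => x _; apply: sumr_ge0 => b _.
by rewrite mulr_ge0 // ltW.
Qed.

Lemma step_sum_gt0 G t f : Gpos G -> (forall x, 0 <= f x) -> 0 < \sum_x f x ->
  0 < \sum_y step G t f y.
Proof.
move=> Gp f0 fp.
have [x _] : exists x, x \in O.
  case: (pickP (fun x : O => true)) => [x _|H]; first by exists x.
  by move: fp; rewrite big_pred0 ?ltxx // => x; rewrite H.
rewrite (bigD1 x) //=.
have h1 := step_gt0 t x Gp f0 fp.
have h2 : 0 <= \sum_(y | y != x) step G t f y by apply: sumr_ge0 => y _; apply: step_ge0.
lra.
Qed.

Lemma fw_ge0 G f t n : Gpos G -> (forall x, 0 <= f x) -> forall x, 0 <= fw G f t n x.
Proof.
move=> Gp; elim: n f t => [|n IH] f t f0 x //=.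
by apply: IH => y; apply: step_ge0.
Qed.

Lemma fw_sum_gt0 G f t n : Gpos G -> (forall x, 0 <= f x) -> 0 < \sum_x f x ->
  0 < \sum_x fw G f t n x.
Proof.
move=> Gp; elim: n f t => [|n IH] f t f0 fp //=.
apply: IH; first by move=> y; apply: step_ge0.
exact: step_sum_gt0.
Qed.

Lemma fw_gt0 G f t n : Gpos G -> (forall x, 0 <= f x) -> 0 < \sum_x f x ->
  forall x, 0 < fw G f t n.+1 x.
Proof.
move=> Gp f0 fp x /=.
have h : forall g t' m, (forall y, 0 < g y) -> 0 < fw G g t' m x.
  move=> g t' m; elim: m g t' => [|m IH] g t' gp //=.
  apply: IH => y; apply: step_gt0 => //; first by move=> z; apply: ltW.
  rewrite (bigD1 x) //=.
  have h1 : 0 <= \sum_(z | z != x) g z by apply: sumr_ge0 => z _; apply: ltW.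
  have h2 := gp x; lra.
by apply: h => y; apply: step_gt0.
Qed.

Lemma bwv_gt0 G v t n : Gpos G -> (forall x, 0 < v x) -> forall x, 0 < bwv G v t n x.
Proof.
move=> Gp; elim: n v t => [|n IH] v t vp x //=.
rewrite (bigD1 x) //= big_bool /=.
have h1 : 0 <= \sum_(y | y != x) \sum_b G t x y b * bwv G v (t + 1) n y.
  apply: sumr_ge0 => y _; apply: sumr_ge0 => b _.
  by rewrite mulr_ge0 // ltW // ?IH.
have h2 := mulr_gt0 (Gp t x x true) (IH v (t+1) vp x).
have h3 := mulr_gt0 (Gp t x x false) (IH v (t+1) vp x).
lra.
Qed.

End Gen2.


Section Gen3.
Variables (R : realFieldType) (O : finType) (T : nat) (c : R).
Hypothesis c0 : 0 < c.

Record sys := Sys { sG : kern R O; su : O -> R; sv : O -> R }.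
Definition al S j := fw (sG S) (su S) 1 j.
Definition be S j := bwv (sG S) (sv S) (j.+1)%:Z (T - j).
Definition Zs S := \sum_x al S 0 x * be S 0 x.
Definition Wt S i x y b := al S i x * sG S (i.+1)%:Z x y b * be S i.+1 y.
Definition gm S i y b := (\sum_x Wt S i x y b) / Zs S.
Definition tm S i x b := (\sum_y Wt S i x y b) / Zs S.
Definition pi S j x := al S j x * be S j x / Zs S.
Definition dd S S' j := \sum_x `|pi S j x - pi S' j x|.
Definition d3 S S' i :=
  \sum_x \sum_y \sum_b `|Wt S i x y b / Zs S - Wt S' i x y b / Zs S'|.

Definition Sand (G : kern R O) := forall t, exists q : O -> bool -> R,
  (forall y b, 0 < q y b) /\ forall x y b, c * q y b <= G t x y b /\ G t x y b <= q y b.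
Definition Valid S := [/\ (forall x, 0 <= su S x), 0 < \sum_x su S x,
  (forall x, 0 < sv S x) & Sand (sG S)].

Lemma Sand_pos G : Sand G -> Gpos G.
Proof.
move=> H t x y b; have [q [qp Hq]] := H t.
have [h1 _] := Hq x y b; apply: lt_le_trans h1; exact: mulr_gt0.
Qed.

Lemma sum3 (F : O * O * bool -> R) :
  \sum_p F p = \sum_x \sum_y \sum_b F (x, y, b).
Proof.
rewrite (pair_bigA _ (fun x y => \sum_b F (x, y, b))).
rewrite (pair_bigA _ (fun xy b => F (xy.1, xy.2, b))).
by apply: eq_bigr => [[[x y] b]].
Qed.

Lemma sum2 (F : O * bool -> R) : \sum_p F p = \sum_y \sum_b F (y, b).
Proof.
rewrite (pair_bigA _ (fun y b => F (y, b))).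
by apply: eq_bigr => [[y b]].
Qed.

Lemma al_rel S j : al S j.+1 = step (sG S) (j.+1)%:Z (al S j).
Proof. have h := fw_split (sG S) (su S) 1 j 1; rewrite addn1 in h. by rewrite /al h /= intS. Qed.

Lemma be_rel S j x : (j < T)%N ->
  be S j x = \sum_y \sum_b sG S (j.+1)%:Z x y b * be S j.+1 y.
Proof.
move=> jT; rewrite /be -(subnSK jT) /=.
have -> : (j.+1)%:Z + 1 = (j.+2)%:Z by rewrite [(j.+2)%:Z]intS addrC.
by [].
Qed.

Lemma Zconst S j : (j <= T)%N -> \sum_x al S j x * be S j x = Zs S.
Proof.
move=> jT; rewrite /Zs /al /be.
have := fw_bw (sG S) (su S) (sv S) 1 j (T - j).
rewrite subnKC // -intS => ->.
by rewrite subn0 /=.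
Qed.

Section V.
Variable S : sys.
Hypothesis VS : Valid S.

Lemma VGpos : Gpos (sG S).
Proof. by case: VS => _ _ _ /Sand_pos. Qed.

Lemma al_ge0 j x : 0 <= al S j x.
Proof. case: VS => u0 _ _ _; apply: fw_ge0 => //; exact: VGpos. Qed.

Lemma al_sum_gt0 j : 0 < \sum_x al S j x.
Proof. case: VS => u0 up _ _; apply: fw_sum_gt0 => //; exact: VGpos. Qed.

Lemma al_gt0S j x : 0 < al S j.+1 x.
Proof. case: VS => u0 up _ _; apply: fw_gt0 => //; exact: VGpos. Qed.

Lemma be_gt0 j x : 0 < be S j x.
Proof. case: VS => _ _ vp _; apply: bwv_gt0 => //; exact: VGpos. Qed.

Lemma Zs_gt0 : 0 < Zs S.
Proof.
rewrite /Zs; apply: sum_pos_mul; [exact: al_ge0|exact: al_sum_gt0|exact: be_gt0].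
Qed.

Lemma Wt_ge0 i x y b : 0 <= Wt S i x y b.
Proof.
by rewrite /Wt !mulr_ge0 ?al_ge0 // ltW // ?be_gt0 ?VGpos.
Qed.

Lemma pi_l i x : (i < T)%N -> pi S i x = (\sum_y \sum_b Wt S i x y b) / Zs S.
Proof.
move=> iT; rewrite /pi (be_rel _ _ iT) mulr_sumr; congr (_ / _).
apply: eq_bigr => y _; rewrite mulr_sumr; apply: eq_bigr => b _.
by rewrite /Wt mulrA.
Qed.

Lemma pi_r i y : (i < T)%N -> pi S i.+1 y = (\sum_x \sum_b Wt S i x y b) / Zs S.
Proof.
move=> iT; rewrite /pi al_rel /step mulr_suml; congr (_ / _).
apply: eq_bigr => x _; rewrite mulr_suml; apply: eq_bigr => b _.
by rewrite /Wt.
Qed.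

Lemma sumWt i : (i < T)%N -> \sum_x \sum_y \sum_b Wt S i x y b = Zs S.
Proof.
move=> iT; rewrite -(Zconst S (ltnW iT)).
apply: eq_bigr => x _; rewrite (be_rel _ _ iT) mulr_sumr.
apply: eq_bigr => y _; rewrite mulr_sumr; apply: eq_bigr => b _.
by rewrite /Wt mulrA.
Qed.

Lemma O_inhab : exists x : O, True.
Proof.
case: VS => _ up _ _.
case: (pickP (fun x : O => true)) => [x _|H]; first by exists x.
by move: up; rewrite big_pred0 ?ltxx // => x; rewrite H.
Qed.

End V.

Section Two.
Variables S S' : sys.
Hypotheses (VS : Valid S) (VS' : Valid S').
Variable i : nat.
Hypothesis iT : (i < T)%N.

Lemma dd_le_d3l : dd S S' i <= d3 S S' i.
Proof.
rewrite /dd /d3; apply: ler_sum => x _.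
rewrite (pi_l S x iT) (pi_l S' x iT) !mulr_suml -sumrB.
apply: (le_trans (ler_norm_sum _ _ _)); apply: ler_sum => y _.
rewrite !mulr_suml -sumrB; exact: ler_norm_sum.
Qed.

Lemma dd_le_d3r : dd S S' i.+1 <= d3 S S' i.
Proof.
rewrite /dd /d3 [in X in _ <= X]exchange_big /=; apply: ler_sum => y _.
rewrite (pi_r S y iT) (pi_r S' y iT) !mulr_suml -sumrB.
apply: (le_trans (ler_norm_sum _ _ _)); apply: ler_sum => x _.
rewrite !mulr_suml -sumrB; exact: ler_norm_sum.
Qed.

Lemma gm_le_d3 : \sum_y \sum_b `|gm S i y b - gm S' i y b| <= d3 S S' i.
Proof.
rewrite /d3 [in X in _ <= X]exchange_big /=; apply: ler_sum => y _.
rewrite [in X in _ <= X]exchange_big /=; apply: ler_sum => b _.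
rewrite /gm !mulr_suml -sumrB; exact: ler_norm_sum.
Qed.

Lemma tm_le_d3 : \sum_x \sum_b `|tm S i x b - tm S' i x b| <= d3 S S' i.
Proof.
rewrite /d3; apply: ler_sum => x _.
rewrite [in X in _ <= X]exchange_big /=; apply: ler_sum => b _.
rewrite /tm !mulr_suml -sumrB; exact: ler_norm_sum.
Qed.

Lemma L_fwd : sG S (i.+1)%:Z = sG S' (i.+1)%:Z -> be S i.+1 = be S' i.+1 ->
  \sum_y \sum_b `|gm S i y b - gm S' i y b| <= (1 - c) * dd S S' i.
Proof.
move=> eG eB.
have [_ _ _ SS] := VS.
have [q [qp Hq]] := SS (i.+1)%:Z.
set G := sG S (i.+1)%:Z.
set B := be S i.+1.
set Qs := \sum_(p : O * bool) q p.1 p.2 * B p.1.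
have Bp : forall y, 0 < B y by move=> y; exact: (be_gt0 VS i.+1 y).
have hr : forall x, be S i x = \sum_p G x p.1 p.2 * B p.1.
  by move=> x; rewrite (be_rel S x iT) sum2.
have hr' : forall x, be S' i x = be S i x.
  by move=> x; rewrite (be_rel S x iT) (be_rel S' x iT) -eG -eB.
have Qp : 0 < Qs.
  have [x0 _] := O_inhab VS.
  apply: (lt_le_trans (be_gt0 VS i x0)); rewrite hr; apply: ler_sum => p _.
  have [_ h] := Hq x0 p.1 p.2; apply: ler_wpM2r => //; exact: ltW.
have minor : forall x p, c * be S i x * (q p.1 p.2 * B p.1 / Qs) <= G x p.1 p.2 * B p.1.
  move=> x p.
  have h1 : be S i x <= Qs.
    rewrite hr; apply: ler_sum => p' _.
    have [_ h] := Hq x p'.1 p'.2; apply: ler_wpM2r => //; exact: ltW.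
  have h2 : c * q p.1 p.2 * B p.1 <= G x p.1 p.2 * B p.1.
    have [h _] := Hq x p.1 p.2; apply: ler_wpM2r => //; exact: ltW.
  apply: le_trans h2.
  have -> : c * be S i x * (q p.1 p.2 * B p.1 / Qs) = (c * q p.1 p.2 * B p.1) * (be S i x / Qs).
    by ring.
  rewrite -[X in _ <= X]mulr1; apply: ler_wpM2l.
    by rewrite ltW // !mulr_gt0 // ?Bp ?qp.
  by rewrite ler_pdivrMr // mul1r.
have Z1 : \sum_x al S i x * be S i x = Zs S by rewrite Zconst // ltnW.
have Z2 : \sum_x al S' i x * be S i x = Zs S'.
  by under eq_bigr do rewrite -hr'; rewrite Zconst // ltnW.
have key := ADW (f:=al S i) (f':=al S' i) (V:= fun x p => G x p.1 p.2 * B p.1)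
   (r := be S i) (nu := fun p => q p.1 p.2 * B p.1 / Qs) hr (be_gt0 VS i) minor
   (ltac:(rewrite Z1; exact: (Zs_gt0 VS))) (ltac:(rewrite Z2; exact: (Zs_gt0 VS'))).
cbv beta in key.
rewrite Z1 Z2 in key.
have nu1 : \sum_(p : O * bool) q p.1 p.2 * B p.1 / Qs = 1.
  by rewrite -mulr_suml divff // gt_eqF.
rewrite nu1 mulr1 sum2 in key.
apply: le_trans (le_trans key _).
  rewrite le_eqVlt; apply/orP; left; apply/eqP.
  apply: eq_bigr => y _; apply: eq_bigr => b _ /=.
  rewrite /gm /Wt -eG -eB; congr (`|_ / _ - _ / _|); apply: eq_bigr => x _; by rewrite mulrA.
rewrite /dd /pi le_eqVlt; apply/orP; left; apply/eqP; congr (_ * _).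
by apply: eq_bigr => x _; rewrite hr'.
Qed.

Lemma L_bwd : sG S (i.+1)%:Z = sG S' (i.+1)%:Z -> al S i = al S' i ->
  dd S S' i <= (1 - c) * dd S S' i.+1.
Proof.
move=> eG eA.
have [_ _ _ SS] := VS.
have [q [qp Hq]] := SS (i.+1)%:Z.
set G := sG S (i.+1)%:Z.
set A := al S i.
set As := \sum_x A x.
have Asp : 0 < As := al_sum_gt0 VS i.
have hr : forall y, al S i.+1 y = \sum_x A x * \sum_b G x y b.
  move=> y; rewrite al_rel /step; apply: eq_bigr => x _; by rewrite mulr_sumr.
have hr' : forall y, al S' i.+1 y = al S i.+1 y.
  by move=> y; rewrite !al_rel /step -eG -eA.
set qb := fun y => \sum_b q y b.
have minor : forall y x, c * al S i.+1 y * (A x / As) <= A x * \sum_b G x y b.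
  move=> y x.
  have h1 : al S i.+1 y <= As * qb y.
    rewrite hr /As mulr_suml; apply: ler_sum => x' _; apply: ler_wpM2l; first exact: (al_ge0 VS).
    apply: ler_sum => b _; by have [_ h] := Hq x' y b.
  have h2 : c * qb y <= \sum_b G x y b.
    rewrite /qb mulr_sumr; apply: ler_sum => b _; by have [h _] := Hq x y b.
  have A0 : 0 <= A x := al_ge0 VS i x.
  have : c * al S i.+1 y * (A x / As) <= c * (As * qb y) * (A x / As).
     apply: ler_wpM2r; first by rewrite divr_ge0 // ltW.
     apply: ler_wpM2l => //; exact: ltW.
  move/le_trans; apply.
  have -> : c * (As * qb y) * (A x / As) = A x * (c * qb y) by field; rewrite gt_eqF.
  by apply: ler_wpM2l.
have Z1 : \sum_y be S i.+1 y * al S i.+1 y = Zs S.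
  by rewrite -(Zconst S iT); apply: eq_bigr => y _; rewrite mulrC.
have Z2 : \sum_y be S' i.+1 y * al S i.+1 y = Zs S'.
  by rewrite -(Zconst S' iT); apply: eq_bigr => y _; rewrite mulrC hr'.
have key := ADW (f := be S i.+1) (f' := be S' i.+1) (V := fun y x => A x * \sum_b G x y b)
  (r := al S i.+1) (nu := fun x => A x / As) hr (al_gt0S VS i) minor
  (ltac:(rewrite Z1; exact: (Zs_gt0 VS))) (ltac:(rewrite Z2; exact: (Zs_gt0 VS'))).
cbv beta in key. rewrite Z1 Z2 in key.
have nu1 : \sum_x A x / As = 1 by rewrite -mulr_suml divff // gt_eqF.
rewrite nu1 mulr1 in key.
have e1 : forall x, \sum_y be S i.+1 y * (A x * \sum_b G x y b) = al S i x * be S i x.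
  move=> x; rewrite (be_rel S x iT) mulr_sumr; apply: eq_bigr => y _.
  rewrite -mulr_suml /A; ring.
have e2 : forall x, \sum_y be S' i.+1 y * (A x * \sum_b G x y b) = al S' i x * be S' i x.
  move=> x; rewrite (be_rel S' x iT) mulr_sumr; apply: eq_bigr => y _.
  rewrite -mulr_suml /A /G -eG -eA; ring.
apply: le_trans (le_trans key _).
  rewrite le_eqVlt; apply/orP; left; apply/eqP.
  by rewrite /dd /pi; apply: eq_bigr => x _; rewrite e1 e2.
rewrite /dd /pi le_eqVlt; apply/orP; left; apply/eqP; congr (_ * _).
by apply: eq_bigr => y _; rewrite hr' !(mulrC (be _ _ _)).
Qed.

Lemma lift_f : sG S (i.+1)%:Z = sG S' (i.+1)%:Z -> be S i.+1 = be S' i.+1 ->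
  d3 S S' i <= dd S S' i.
Proof.
move=> eG eB; rewrite /d3 /dd; apply: ler_sum => x _.
have hb' : be S' i x = be S i x.
  by rewrite (be_rel S x iT) (be_rel S' x iT) -eG -eB.
set D := al S i x / Zs S - al S' i x / Zs S'.
have e : forall y b, Wt S i x y b / Zs S - Wt S' i x y b / Zs S'
    = D * (sG S (i.+1)%:Z x y b * be S i.+1 y).
  by move=> y b; rewrite /D /Wt -eG -eB; ring.
have E : \sum_y \sum_b `|Wt S i x y b / Zs S - Wt S' i x y b / Zs S'|
    = `|D| * \sum_y \sum_b sG S (i.+1)%:Z x y b * be S i.+1 y.
  rewrite mulr_sumr; apply: eq_bigr => y _; rewrite mulr_sumr; apply: eq_bigr => b _.
  rewrite e normrM (ger0_norm (x := _ * _)) //.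
  by rewrite mulr_ge0 // ltW // ?(be_gt0 VS) // VGpos.
rewrite E -(be_rel S x iT) /pi hb'.
have -> : al S i x * be S i x / Zs S - al S' i x * be S i x / Zs S' = D * be S i x.
  by rewrite /D; ring.
by rewrite normrM (gtr0_norm (be_gt0 VS i x)).
Qed.

Lemma lift_b : sG S (i.+1)%:Z = sG S' (i.+1)%:Z -> al S i = al S' i ->
  d3 S S' i <= dd S S' i.+1.
Proof.
move=> eG eA; rewrite /d3 /dd exchange_big /=; apply: ler_sum => y _.
have ha' : al S' i.+1 y = al S i.+1 y.
  by rewrite !al_rel /step -eG -eA.
set D := be S i.+1 y / Zs S - be S' i.+1 y / Zs S'.
have e : forall x b, Wt S i x y b / Zs S - Wt S' i x y b / Zs S'
    = (al S i x * sG S (i.+1)%:Z x y b) * D.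
  by move=> x b; rewrite /D /Wt -eG -eA; ring.
have E : \sum_x \sum_b `|Wt S i x y b / Zs S - Wt S' i x y b / Zs S'|
    = (\sum_x \sum_b al S i x * sG S (i.+1)%:Z x y b) * `|D|.
  rewrite mulr_suml; apply: eq_bigr => x _; rewrite mulr_suml; apply: eq_bigr => b _.
  rewrite e normrM (ger0_norm (x := _ * _)) //.
  by rewrite mulr_ge0 // ?(al_ge0 VS) // ltW // VGpos.
have E2 : \sum_x \sum_b al S i x * sG S (i.+1)%:Z x y b = al S i.+1 y by rewrite al_rel.
rewrite E E2 /pi ha'.
have -> : al S i.+1 y * be S i.+1 y / Zs S - al S i.+1 y * be S' i.+1 y / Zs S'
   = al S i.+1 y * D.
  by rewrite /D; ring.
by rewrite normrM (gtr0_norm (al_gt0S VS i y)).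
Qed.

Lemma ratio3 (rho kap : R) : al S i = al S' i -> be S i.+1 = be S' i.+1 -> 0 < kap ->
  (forall x y b, `|sG S' (i.+1)%:Z x y b - sG S (i.+1)%:Z x y b| <= rho * sG S (i.+1)%:Z x y b) ->
  (forall x y b, kap * sG S (i.+1)%:Z x y b <= sG S' (i.+1)%:Z x y b) ->
  d3 S S' i <= 2 * rho / kap.
Proof.
move=> eA eB kp Hr Hk.
have eW : forall x y b, Wt S' i x y b = al S i x * sG S' (i.+1)%:Z x y b * be S i.+1 y.
  by move=> x y b; rewrite /Wt eA eB.
have Hr' : forall p : O * O * bool, `|Wt S' i p.1.1 p.1.2 p.2 - Wt S i p.1.1 p.1.2 p.2|
     <= rho * Wt S i p.1.1 p.1.2 p.2.
  move=> [[x y] b] /=; rewrite eW.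
  have -> : al S i x * sG S' (i.+1)%:Z x y b * be S i.+1 y - Wt S i x y b
     = (al S i x * be S i.+1 y) * (sG S' (i.+1)%:Z x y b - sG S (i.+1)%:Z x y b).
    by rewrite /Wt; ring.
  have ab0 : 0 <= al S i x * be S i.+1 y by rewrite mulr_ge0 // ?(al_ge0 VS) // ltW // (be_gt0 VS).
  rewrite normrM (ger0_norm ab0).
  have -> : rho * Wt S i x y b = (al S i x * be S i.+1 y) * (rho * sG S (i.+1)%:Z x y b).
    by rewrite /Wt; ring.
  exact: ler_wpM2l.
have Hk' : forall p : O * O * bool, kap * Wt S i p.1.1 p.1.2 p.2 <= Wt S' i p.1.1 p.1.2 p.2.
  move=> [[x y] b] /=; rewrite eW.
  have ab0 : 0 <= al S i x * be S i.+1 y by rewrite mulr_ge0 // ?(al_ge0 VS) // ltW // (be_gt0 VS).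
  have -> : kap * Wt S i x y b = (al S i x * be S i.+1 y) * (kap * sG S (i.+1)%:Z x y b).
    by rewrite /Wt; ring.
  have -> : al S i x * sG S' (i.+1)%:Z x y b * be S i.+1 y
      = (al S i x * be S i.+1 y) * sG S' (i.+1)%:Z x y b by ring.
  exact: ler_wpM2l.
have sW : \sum_(p : O * O * bool) Wt S i p.1.1 p.1.2 p.2 = Zs S.
  by rewrite sum3 /= sumWt.
have sW' : \sum_(p : O * O * bool) Wt S' i p.1.1 p.1.2 p.2 = Zs S'.
  by rewrite sum3 /= sumWt.
have key := ratio_tv (w := fun p : O * O * bool => Wt S i p.1.1 p.1.2 p.2)
   (w' := fun p : O * O * bool => Wt S' i p.1.1 p.1.2 p.2)
   (fun p => Wt_ge0 VS i p.1.1 p.1.2 p.2) (ltac:(rewrite sW; exact: (Zs_gt0 VS))) kp Hr' Hk'.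
cbv beta in key; rewrite sW sW' sum3 /= in key.
exact: key.
Qed.

End Two.
Hypothesis c1 : c <= 1.

Definition tvg S S' i := 2^-1 * \sum_y \sum_b `|gm S i y b - gm S' i y b|.
Definition tvt S S' i := 2^-1 * \sum_x \sum_b `|tm S i x b - tm S' i x b|.

Lemma tvg_tri S1 S2 S3 i : tvg S1 S3 i <= tvg S1 S2 i + tvg S2 S3 i.
Proof.
rewrite /tvg -mulrDr; apply: ler_wpM2l; first by rewrite invr_ge0.
rewrite -big_split; apply: ler_sum => y _.
rewrite -big_split; apply: ler_sum => b _.
have -> : gm S1 i y b - gm S3 i y b = (gm S1 i y b - gm S2 i y b) + (gm S2 i y b - gm S3 i y b).
  by rewrite addrA subrK.
exact: ler_normD.
Qed.

Lemma tvt_tri S1 S2 S3 i : tvt S1 S3 i <= tvt S1 S2 i + tvt S2 S3 i.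
Proof.
rewrite /tvt -mulrDr; apply: ler_wpM2l; first by rewrite invr_ge0.
rewrite -big_split; apply: ler_sum => y _.
rewrite -big_split; apply: ler_sum => b _.
have -> : tm S1 i y b - tm S3 i y b = (tm S1 i y b - tm S2 i y b) + (tm S2 i y b - tm S3 i y b).
  by rewrite addrA subrK.
exact: ler_normD.
Qed.

Lemma pi_ge0 S (VS : Valid S) j x : 0 <= pi S j x.
Proof. by rewrite /pi divr_ge0 ?mulr_ge0 ?(al_ge0 VS) // ltW ?(be_gt0 VS) ?(Zs_gt0 VS). Qed.

Lemma pi_sum S (VS : Valid S) j : (j <= T)%N -> \sum_x pi S j x = 1.
Proof.
move=> jT; rewrite /pi -mulr_suml Zconst // divff // gt_eqF //; exact: (Zs_gt0 VS).
Qed.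

Lemma dd_le2 S S' (VS : Valid S) (VS' : Valid S') j : (j <= T)%N -> dd S S' j <= 2.
Proof.
move=> jT; rewrite /dd.
apply: (le_trans (ler_sum _ (fun x _ => ler_normB (pi S j x) (pi S' j x)))).
rewrite big_split /=.
under eq_bigr do rewrite ger0_norm ?(pi_ge0 VS) //.
under [X in _ + X <= _]eq_bigr do rewrite ger0_norm ?(pi_ge0 VS') //.
by rewrite !pi_sum.
Qed.

Lemma dd_le_gm S S' i : (i < T)%N ->
  dd S S' i.+1 <= \sum_y \sum_b `|gm S i y b - gm S' i y b|.
Proof.
move=> iT; rewrite /dd; apply: ler_sum => y _.
have e : forall S0, pi S0 i.+1 y = \sum_b gm S0 i y b.
  move=> S0; rewrite (pi_r S0 y iT) exchange_big /= mulr_suml.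
  by apply: eq_bigr => b _; rewrite /gm.
rewrite !e -sumrB; exact: ler_norm_sum.
Qed.

Lemma c_ge0 : 0 <= 1 - c.
Proof. by rewrite subr_ge0. Qed.

Section ChainA.
Variables S S' : sys.
Hypotheses (VS : Valid S) (VS' : Valid S') (eG : sG S = sG S') (eV : sv S = sv S').

Lemma chain_a j : (j <= T)%N -> dd S S' j <= 2 * (1 - c) ^+ j.
Proof.
elim: j => [|j IH] jT; first by rewrite expr0 mulr1 dd_le2.
have eB : be S j.+1 = be S' j.+1 by rewrite /be eG eV.
apply: (le_trans (dd_le_gm S S' jT)).
apply: (le_trans (L_fwd VS VS' jT (ltac:(by rewrite eG)) eB)).
rewrite exprS mulrCA; apply: ler_wpM2l; first exact: c_ge0.
by apply: IH; apply: ltnW.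
Qed.

Lemma res_a_g i : (i < T)%N -> tvg S S' i <= (1 - c) ^+ i.
Proof.
move=> iT.
have eB : be S i.+1 = be S' i.+1 by rewrite /be eG eV.
rewrite /tvg.
have h0 := L_fwd VS VS' iT (ltac:(by rewrite eG)) eB.
have h := chain_a (ltnW iT).
have h1 : (1 - c) * dd S S' i <= (1 - c) * (2 * (1 - c) ^+ i) by apply: ler_wpM2l; first exact: c_ge0.
have h2 : (1 - c) * (1 - c) ^+ i <= (1 - c) ^+ i.
  have hx := exprn_ge0 i c_ge0; have cc0 := c0; nra.
have h3 : 0 <= 2^-1 :> R by rewrite invr_ge0.
nra.
Qed.

Lemma res_a_t i : (i < T)%N -> tvt S S' i <= (1 - c) ^+ i.
Proof.
move=> iT.
have eB : be S i.+1 = be S' i.+1 by rewrite /be eG eV.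
rewrite /tvt.
have h0 := tm_le_d3 S S' i.
have h1 := lift_f VS iT (ltac:(by rewrite eG)) eB.
have h := chain_a (ltnW iT).
have h3 : 0 <= 2^-1 :> R by rewrite invr_ge0.
nra.
Qed.
End ChainA.

Section ChainB.
Variables S S' : sys.
Hypotheses (VS : Valid S) (VS' : Valid S') (eG : sG S = sG S') (eU : su S = su S').

Lemma chain_b k : (k <= T)%N -> dd S S' (T - k) <= 2 * (1 - c) ^+ k.
Proof.
elim: k => [|k IH] kT; first by rewrite expr0 mulr1 subn0 dd_le2.
have jT : (T - k.+1 < T)%N by rewrite ltn_subrL; apply/andP; split => //; apply: leq_ltn_trans kT.
have eA : al S (T - k.+1) = al S' (T - k.+1) by rewrite /al eG eU.
apply: (le_trans (L_bwd VS VS' jT (ltac:(by rewrite eG)) eA)).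
rewrite subnSK // exprS mulrCA; apply: ler_wpM2l; first exact: c_ge0.
by apply: IH; apply: ltnW.
Qed.

Lemma res_b_d3 i : (i < T)%N -> 2^-1 * d3 S S' i <= (1 - c) ^+ (T - i.+1).
Proof.
move=> iT.
have eA : al S i = al S' i by rewrite /al eG eU.
have h1 := lift_b VS (ltac:(by rewrite eG)) eA.
have h := chain_b (leq_subr i.+1 T).
rewrite subKn // in h.
have h3 : 0 <= 2^-1 :> R by rewrite invr_ge0.
nra.
Qed.

Lemma res_b_g i : (i < T)%N -> tvg S S' i <= (1 - c) ^+ (T - i.+1).
Proof.
move=> iT; apply: le_trans (res_b_d3 iT); rewrite /tvg; apply: ler_wpM2l; first by rewrite invr_ge0.
exact: gm_le_d3.
Qed.

Lemma res_b_t i : (i < T)%N -> tvt S S' i <= (1 - c) ^+ (T - i.+1).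
Proof.
move=> iT; apply: le_trans (res_b_d3 iT); rewrite /tvt; apply: ler_wpM2l; first by rewrite invr_ge0.
exact: tm_le_d3.
Qed.
End ChainB.

Lemma tvg_refl S i : tvg S S i = 0.
Proof. by rewrite /tvg big1 ?mulr0 // => y _; rewrite big1 // => b _; rewrite subrr normr0. Qed.
Lemma tvt_refl S i : tvt S S i = 0.
Proof. by rewrite /tvt big1 ?mulr0 // => y _; rewrite big1 // => b _; rewrite subrr normr0. Qed.

Section Congr.
Variables S1 S2 : sys.
Hypotheses (eu : su S1 = su S2) (ev : sv S1 = sv S2)
  (eG : forall t : nat, (0 < t <= T)%N -> sG S1 t%:Z = sG S2 t%:Z).

Lemma al_congr j : (j <= T)%N -> al S1 j = al S2 j.
Proof.
move=> jT; rewrite /al eu; apply: fw_congr => k kj.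
rewrite -intS; apply: eG; apply/andP; split => //; exact: leq_trans kj jT.
Qed.

Lemma be_congr j : be S1 j = be S2 j.
Proof.
rewrite /be ev; apply: bwv_congr => k kj.
rewrite -PoszD; apply: eG; apply/andP; split => //.
by rewrite addSn -ltn_subRL.
Qed.

Lemma Zs_congr : Zs S1 = Zs S2.
Proof. by rewrite /Zs al_congr // be_congr. Qed.

Lemma Wt_congr i : (i < T)%N -> Wt S1 i = Wt S2 i.
Proof.
move=> iT; rewrite /Wt al_congr ?(ltnW iT) // be_congr eG //.
Qed.

Lemma gm_congr i y b : (i < T)%N -> gm S1 i y b = gm S2 i y b.
Proof. by move=> iT; rewrite /gm Zs_congr Wt_congr. Qed.

Lemma tm_congr i y b : (i < T)%N -> tm S1 i y b = tm S2 i y b.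
Proof. by move=> iT; rewrite /tm Zs_congr Wt_congr. Qed.
End Congr.

Section ChainC.
Variables (G G' : kern R O) (u' v' : O -> R) (e : R).
Hypotheses (SG : Sand G) (SG' : Sand G') (u0 : forall x, 0 <= u' x)
  (up : 0 < \sum_x u' x) (vp : forall x, 0 < v' x) (e0 : 0 <= e).
Hypothesis close : forall t, exists rho kap, [/\ 0 < kap, rho <= e * kap,
  (forall x y b, `|G' t x y b - G t x y b| <= rho * G t x y b) &
  (forall x y b, kap * G t x y b <= G' t x y b)].

Definition Gh (m : nat) : kern R O := fun t => if t <= m%:Z then G' t else G t.
Definition Hy m := Sys (Gh m) u' v'.

Lemma VHy m : Valid (Hy m).
Proof.
split => //= t; rewrite /Gh; case: ifP => _; [exact: SG' | exact: SG].
Qed.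

Lemma Hal m j : (j <= m)%N -> al (Hy m) j = al (Hy m.+1) j.
Proof.
move=> jm; rewrite /al /=; apply: fw_congr => k kj.
rewrite /Gh -intS !lez_nat ifT; last exact: leq_trans kj jm.
by rewrite ifT // ltnS ltnW // (leq_trans kj jm).
Qed.

Lemma Hbe m j : (m < j)%N -> be (Hy m) j = be (Hy m.+1) j.
Proof.
move=> mj; rewrite /be /=; apply: bwv_congr => k kj.
rewrite /Gh -PoszD !lez_nat ifF; last first.
  by apply/negbTE; rewrite -ltnNge addSn ltnS; apply: leq_trans (ltnW mj) (leq_addr k j).
rewrite ifF //; apply/negbTE; rewrite -ltnNge addSn ltnS; apply: leq_trans mj (leq_addr k j).
Qed.

Lemma HG1 m t : (t <= m)%N -> sG (Hy m) t%:Z = sG (Hy m.+1) t%:Z.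
Proof. by move=> tm; rewrite /= /Gh !lez_nat tm (leq_trans tm). Qed.

Lemma HG2 m t : (m.+1 < t)%N -> sG (Hy m) t%:Z = sG (Hy m.+1) t%:Z.
Proof.
move=> mt; rewrite /= /Gh !lez_nat !ifF //; apply/negbTE; rewrite -ltnNge //.
exact: ltn_trans mt.
Qed.

Lemma d3m m : (m < T)%N -> d3 (Hy m) (Hy m.+1) m <= 2 * e.
Proof.
move=> mT.
have [rho [kap [kp rk Hr Hk]]] := close (m.+1)%:Z.
have e1 : sG (Hy m) (m.+1)%:Z = G (m.+1)%:Z.
  by rewrite /= /Gh lez_nat ifF // ltnn.
have e2 : sG (Hy m.+1) (m.+1)%:Z = G' (m.+1)%:Z.
  by rewrite /= /Gh lez_nat ifT.
have Hr' : forall x y b, `|sG (Hy m.+1) (m.+1)%:Z x y b - sG (Hy m) (m.+1)%:Z x y b|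
    <= rho * sG (Hy m) (m.+1)%:Z x y b by move=> x y b; rewrite e1 e2.
have Hk' : forall x y b, kap * sG (Hy m) (m.+1)%:Z x y b <= sG (Hy m.+1) (m.+1)%:Z x y b.
  by move=> x y b; rewrite e1 e2.
have key := ratio3 (VHy m) mT (Hal (leqnn m)) (Hbe (ltnSn m)) kp Hr' Hk'.
apply: le_trans key _.
rewrite -mulrA; apply: ler_wpM2l => //.
by rewrite ler_pdivrMr.
Qed.

Let x := 1 - c.

Lemma fwd_k m k : (m < T)%N -> (m.+1 + k <= T)%N ->
  dd (Hy m) (Hy m.+1) (m.+1 + k) <= 2 * e * x ^+ k.
Proof.
move=> mT; elim: k => [|k IH] hk.
  rewrite addn0 expr0 mulr1; apply: le_trans (dd_le_d3r _ _ mT) (d3m mT).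
have jT : (m.+1 + k < T)%N by rewrite -addnS.
rewrite addnS.
apply: le_trans (dd_le_gm _ _ jT) _.
have hg : (m.+1 < (m.+1 + k).+1)%N by rewrite ltnS leq_addr.
have hb : (m < (m.+1 + k).+1)%N by rewrite ltnS ltnW // ltnS leq_addr.
apply: le_trans (L_fwd (VHy m) (VHy m.+1) jT (HG2 hg) (Hbe hb)) _.
rewrite exprS mulrCA; apply: ler_wpM2l; first exact: c_ge0.
by apply: IH; apply: ltnW.
Qed.

Lemma bwd_k m k : (m < T)%N -> (k <= m)%N ->
  dd (Hy m) (Hy m.+1) (m - k) <= 2 * e * x ^+ k.
Proof.
move=> mT; elim: k => [|k IH] hk.
  rewrite subn0 expr0 mulr1; apply: le_trans (dd_le_d3l _ _ mT) (d3m mT).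
have jT : (m - k.+1 < T)%N by apply: leq_ltn_trans mT; apply: leq_subr.
have hg : ((m - k.+1).+1 <= m)%N by rewrite subnSK // leq_subr.
have ha : (m - k.+1 <= m)%N by exact: leq_subr.
apply: le_trans (L_bwd (VHy m) (VHy m.+1) jT (HG1 hg) (Hal ha)) _.
rewrite subnSK // exprS mulrCA; apply: ler_wpM2l; first exact: c_ge0.
by apply: IH; apply: ltnW.
Qed.

Definition g m i := if (m <= i)%N then x ^+ (i - m) else x ^+ (m - i.+1).

Lemma g_ge0 m i : 0 <= g m i.
Proof. by rewrite /g; case: ifP => _; rewrite exprn_ge0 // c_ge0. Qed.

Lemma half_d3 m i : (m < T)%N -> (i < T)%N -> (i < m)%N ->
  2^-1 * d3 (Hy m) (Hy m.+1) i <= e * g m i.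
Proof.
move=> mT iT im.
have h1 := lift_b (VHy m) (HG1 im) (Hal (ltnW im)).
have h2 := bwd_k mT (leq_subr i.+1 m).
rewrite subKn // in h2.
rewrite /g leqNgt im /=.
have h3 : 0 <= 2^-1 :> R by rewrite invr_ge0.
have h4 : 2^-1 * (2 * e * x ^+ (m - i.+1)) = e * x ^+ (m - i.+1) by field.
nra.
Qed.

Lemma pg m i : (m < T)%N -> (i < T)%N -> tvg (Hy m) (Hy m.+1) i <= e * g m i.
Proof.
move=> mT iT.
have h3 : 0 <= 2^-1 :> R by rewrite invr_ge0.
have hg : tvg (Hy m) (Hy m.+1) i <= 2^-1 * d3 (Hy m) (Hy m.+1) i.
  by rewrite /tvg; apply: ler_wpM2l => //; apply: gm_le_d3.
case: (ltnP i m) => [im|mi]; first exact: le_trans hg (half_d3 mT iT im).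
case: (eqVneq i m) => [eim|nim].
  subst i; rewrite /g leqnn subnn expr0 mulr1.
  apply: le_trans hg _; have := d3m mT; lra.
have mi' : (m < i)%N by rewrite ltn_neqAle eq_sym nim.
have h0 := L_fwd (VHy m) (VHy m.+1) iT (HG2 (t := i.+1) (m := m) (ltac:(by rewrite ltnS))) (Hbe (ltnW mi' : (m < i.+1)%N)).
have hd := fwd_k mT (ltac:(by rewrite subnKC // ltnW) : (m.+1 + (i - m.+1) <= T)%N).
rewrite subnKC // in hd.
have h5 : x * dd (Hy m) (Hy m.+1) i <= x * (2 * e * x ^+ (i - m.+1)) by apply: ler_wpM2l => //; exact: c_ge0.
rewrite /g (ltnW mi') -(subnSK mi') exprS /tvg.
rewrite /x in h5 *; lra.
Qed.

Lemma pt m i : (m < T)%N -> (i < T)%N -> tvt (Hy m) (Hy m.+1) i <= e * (g m i.-1 + g m i).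
Proof.
move=> mT iT.
have h3 : 0 <= 2^-1 :> R by rewrite invr_ge0.
have ht : tvt (Hy m) (Hy m.+1) i <= 2^-1 * d3 (Hy m) (Hy m.+1) i.
  by rewrite /tvt; apply: ler_wpM2l => //; apply: tm_le_d3.
have g1 := g_ge0 m i.-1; have g2 := g_ge0 m i.
have g3 : 0 <= e * g m i.-1 by apply: mulr_ge0.
have g4 : 0 <= e * g m i by apply: mulr_ge0.
rewrite mulrDr.
case: (ltnP i m) => [im|mi].
  have h := half_d3 mT iT im; lra.
case: (eqVneq i m) => [eim|nim].
  subst i; have gm1 : g m m = 1 by rewrite /g leqnn subnn expr0.
  rewrite gm1 mulr1; have h := d3m mT; lra.
have mi' : (m < i)%N by rewrite ltn_neqAle eq_sym nim.
have h1 := lift_f (VHy m) iT (HG2 (t := i.+1) (m := m) (ltac:(by rewrite ltnS))) (Hbe (ltnW mi' : (m < i.+1)%N)).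
have hd := fwd_k mT (ltac:(by rewrite subnKC // ltnW) : (m.+1 + (i - m.+1) <= T)%N).
rewrite subnKC // in hd.
have eg : g m i.-1 = x ^+ (i - m.+1).
  rewrite /g ifT; last by rewrite -ltnS prednK // (leq_ltn_trans _ mi').
  by rewrite -subn1 subnAC subn1 -subnS.
rewrite eg in g1 *.
nra.
Qed.

Lemma tele_g i n : (i < T)%N -> (n <= T)%N -> tvg (Hy 0) (Hy n) i <= e * \sum_(m < n) g m i.
Proof.
move=> iT; elim: n => [|n IH] nT; first by rewrite tvg_refl big_ord0 mulr0.
apply: le_trans (tvg_tri _ (Hy n) _ _) _.
rewrite big_ord_recr /= mulrDr; apply: lerD; first by apply: IH; apply: ltnW.
exact: pg.
Qed.

Lemma tele_t i n : (i < T)%N -> (n <= T)%N ->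
  tvt (Hy 0) (Hy n) i <= e * \sum_(m < n) (g m i.-1 + g m i).
Proof.
move=> iT; elim: n => [|n IH] nT; first by rewrite tvt_refl big_ord0 mulr0.
apply: le_trans (tvt_tri _ (Hy n) _ _) _.
rewrite big_ord_recr /= mulrDr; apply: lerD; first by apply: IH; apply: ltnW.
exact: pt.
Qed.

Lemma gsum_c i : (i < T)%N -> \sum_(m < T) g m i <= 2 / c.
Proof.
move=> iT; have hx : 0 <= x < 1.
  apply/andP; split; first exact: c_ge0.
  rewrite /x; have := c0; lra.
have := gsum hx iT; rewrite /x.
have -> : 1 - (1 - c) = c by ring.
by [].
Qed.

Lemma pert_g i : (i < T)%N -> tvg (Hy 0) (Hy T) i <= 2 * e / c.
Proof.
move=> iT; apply: le_trans (tele_g iT (leqnn T)) _.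
have -> : 2 * e / c = e * (2 / c) by ring.
apply: ler_wpM2l => //; exact: gsum_c.
Qed.

Lemma pert_t i : (i < T)%N -> tvt (Hy 0) (Hy T) i <= 4 * e / c.
Proof.
move=> iT; apply: le_trans (tele_t iT (leqnn T)) _.
rewrite big_split /=.
have h1 := gsum_c (leq_ltn_trans (leq_pred i) iT).
have h2 := gsum_c iT.
have -> : 4 * e / c = e * (2 / c + 2 / c) by field; rewrite gt_eqF.
apply: ler_wpM2l => //; exact: lerD.
Qed.
End ChainC.

Lemma tvg_congr S1 S2 S1' S2' i :
  (forall y b, gm S1 i y b = gm S1' i y b) -> (forall y b, gm S2 i y b = gm S2' i y b) ->
  tvg S1 S2 i = tvg S1' S2' i.
Proof.
move=> h1 h2; rewrite /tvg; congr (_ * _); apply: eq_bigr => y _; apply: eq_bigr => b _.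
by rewrite h1 h2.
Qed.

Lemma tvt_congr S1 S2 S1' S2' i :
  (forall y b, tm S1 i y b = tm S1' i y b) -> (forall y b, tm S2 i y b = tm S2' i y b) ->
  tvt S1 S2 i = tvt S1' S2' i.
Proof.
move=> h1 h2; rewrite /tvt; congr (_ * _); apply: eq_bigr => y _; apply: eq_bigr => b _.
by rewrite h1 h2.
Qed.

Theorem abstract_main (G G' : kern R O) (u v u' v' : O -> R) (e : R) :
  Sand G -> Sand G' -> (forall x, 0 <= u x) -> 0 < \sum_x u x -> (forall x, 0 < v x) ->
  (forall x, 0 <= u' x) -> 0 < \sum_x u' x -> (forall x, 0 < v' x) -> 0 <= e ->
  (forall t, exists rho kap, [/\ 0 < kap, rho <= e * kap,
      (forall x y b, `|G' t x y b - G t x y b| <= rho * G t x y b) &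
      (forall x y b, kap * G t x y b <= G' t x y b)]) ->
  forall i, (i < T)%N ->
  tvg (Sys G u v) (Sys G' u' v') i <= (1 - c) ^+ i + (1 - c) ^+ (T - i.+1) + 2 * e / c /\
  tvt (Sys G u v) (Sys G' u' v') i <= (1 - c) ^+ i + (1 - c) ^+ (T - i.+1) + 4 * e / c.
Proof.
move=> SG SG' u0 up vp u0' up' vp' e0 close i iT.
have V1 : Valid (Sys G u v) by split.
have V2 : Valid (Sys G u' v) by split.
have V3 : Valid (Sys G u' v') by split.
have V4 : Valid (Sys G' u' v') by split.
have H0 : forall t : nat, (0 < t <= T)%N -> sG (Sys G u' v') t%:Z = sG (Hy G G' u' v' 0) t%:Z.
  move=> t /andP[t0 _]; rewrite /= /Gh lez_nat ifF //.
  by apply/negbTE; rewrite -ltnNge.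
have HT : forall t : nat, (0 < t <= T)%N -> sG (Sys G' u' v') t%:Z = sG (Hy G G' u' v' T) t%:Z.
  by move=> t /andP[_ tT]; rewrite /= /Gh lez_nat ifT.
have eg : tvg (Sys G u' v') (Sys G' u' v') i = tvg (Hy G G' u' v' 0) (Hy G G' u' v' T) i.
  apply: tvg_congr => y b.
    exact: (gm_congr (S1 := Sys G u' v') (S2 := Hy G G' u' v' 0) erefl erefl H0).
  exact: (gm_congr (S1 := Sys G' u' v') (S2 := Hy G G' u' v' T) erefl erefl HT).
have et : tvt (Sys G u' v') (Sys G' u' v') i = tvt (Hy G G' u' v' 0) (Hy G G' u' v' T) i.
  apply: tvt_congr => y b.
    exact: (tm_congr (S1 := Sys G u' v') (S2 := Hy G G' u' v' 0) erefl erefl H0).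
  exact: (tm_congr (S1 := Sys G' u' v') (S2 := Hy G G' u' v' T) erefl erefl HT).
split.
  apply: le_trans (tvg_tri _ (Sys G u' v) _ _) _.
  rewrite -addrA; apply: lerD; last first.
    apply: le_trans (tvg_tri _ (Sys G u' v') _ _) _.
    apply: lerD; last by rewrite eg; exact: pert_g.
    exact: (res_b_g V2 V3 erefl erefl iT).
  exact: (res_a_g V1 V2 erefl erefl iT).
apply: le_trans (tvt_tri _ (Sys G u' v) _ _) _.
rewrite -addrA; apply: lerD.
  exact: (res_a_t V1 V2 erefl erefl iT).
apply: le_trans (tvt_tri _ (Sys G u' v') _ _) _.
apply: lerD; last by rewrite et; exact: pert_t.
exact: (res_b_t V2 V3 erefl erefl iT).
Qed.

End Gen3.


Section Path.
Variables (R : realFieldType) (O : finType).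

Definition fcons (T : finType) n (x : T) (f : {ffun 'I_n -> T}) : {ffun 'I_n.+1 -> T} :=
  [ffun i => if unlift ord0 i is Some j then f j else x].

Lemma fcons0 (T : finType) n (x : T) (f : {ffun 'I_n -> T}) : fcons x f ord0 = x.
Proof. by rewrite /fcons ffunE unlift_none. Qed.

Lemma fconsS (T : finType) n (x : T) (f : {ffun 'I_n -> T}) j : fcons x f (lift ord0 j) = f j.
Proof. by rewrite /fcons ffunE liftK. Qed.

Lemma ffun_peel (T : finType) n (F : {ffun 'I_n.+1 -> T} -> R) :
  \sum_f F f = \sum_x \sum_(f : {ffun 'I_n -> T}) F (fcons x f).
Proof.
rewrite (pair_bigA _ (fun x f => F (fcons x f))) /=.
rewrite (reindex (fun p : T * {ffun 'I_n -> T} => fcons p.1 p.2)) //=.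
exists (fun o : {ffun 'I_n.+1 -> T} => (o ord0, [ffun j => o (lift ord0 j)])) => [[x f] _|o _] /=.
  rewrite fcons0; congr (_, _); apply/ffunP => j; by rewrite ffunE fconsS.
apply/ffunP => i; rewrite /fcons ffunE.
by case: unliftP => [j ->|->]; rewrite ?ffunE.
Qed.

Lemma sum_ffun0 (T : finType) (C : R) : \sum_(f : {ffun 'I_0 -> T}) C = C.
Proof. by rewrite sumr_const card_ffun card_ord expn0 mulr1n. Qed.

Lemma inord0' n : (inord 0 : 'I_n.+1) = ord0.
Proof. by apply/val_inj; rewrite /= inordK. Qed.

Lemma inordS_lift n j : (j <= n)%N -> (inord j.+1 : 'I_n.+2) = lift ord0 (inord j : 'I_n.+1).
Proof.
move=> jn; apply/val_inj; rewrite /= /bump /= add1n !inordK //.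
Qed.

Lemma path_sum (G : kern R O) (f : O -> R) (t0 : int) (N : nat) :
  \sum_(ob : {ffun 'I_N.+1 -> O} * {ffun 'I_N -> bool})
     f (ob.1 ord0) * \prod_(j < N) G (t0 + (j : nat)%:Z) (ob.1 (inord j)) (ob.1 (inord j.+1)) (ob.2 j)
  = \sum_x f x * bwv G (fun _ => 1) t0 N x.
Proof.
rewrite -(pair_bigA _ (fun (o : {ffun 'I_N.+1 -> O}) (b : {ffun 'I_N -> bool}) => f (o ord0) * \prod_(j < N) G (t0 + (j : nat)%:Z) (o (inord j)) (o (inord j.+1)) (b j))) /=.
elim: N f t0 => [|N IH] f t0.
  rewrite ffun_peel /=; apply: eq_bigr => x _.
  under eq_bigr do under eq_bigr do rewrite big_ord0 mulr1 fcons0.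
  by rewrite !sum_ffun0 mulr1.
rewrite ffun_peel.
transitivity (\sum_x \sum_(o' : {ffun 'I_N.+1 -> O}) \sum_b0 \sum_(b' : {ffun 'I_N -> bool})
   f x * (G t0 x (o' ord0) b0 * \prod_(j < N) G (t0 + 1 + (j : nat)%:Z) (o' (inord j)) (o' (inord j.+1)) (b' j))).
  apply: eq_bigr => x _; apply: eq_bigr => o' _; rewrite ffun_peel; apply: eq_bigr => b0 _.
  apply: eq_bigr => b' _; rewrite fcons0 big_ord_recl /= addr0 inord0' fcons0.
  rewrite (inordS_lift (n := N) (j := 0%N)) // fconsS inord0' fcons0.
  congr (_ * (_ * _)); apply: eq_bigr => j _.
  rewrite fconsS /bump /= add1n addS_int (inordS_lift (j := j)) ?(ltnW (ltn_ord j)) //.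
  rewrite (inordS_lift (j := j.+1)) ?ltn_ord // !fconsS //.
transitivity (\sum_(o' : {ffun 'I_N.+1 -> O}) \sum_(b' : {ffun 'I_N -> bool})
   (\sum_x \sum_b0 f x * G t0 x (o' ord0) b0) *
     \prod_(j < N) G (t0 + 1 + (j : nat)%:Z) (o' (inord j)) (o' (inord j.+1)) (b' j)).
  rewrite exchange_big /=; apply: eq_bigr => o' _.
  symmetry.
  transitivity (\sum_(b' : {ffun 'I_N -> bool}) \sum_x \sum_b0 f x * (G t0 x (o' ord0) b0 *
     \prod_(j < N) G (t0 + 1 + (j : nat)%:Z) (o' (inord j)) (o' (inord j.+1)) (b' j))).
    apply: eq_bigr => b' _; rewrite mulr_suml; apply: eq_bigr => x _.
    rewrite mulr_suml; apply: eq_bigr => b0 _; by rewrite mulrA.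
  rewrite exchange_big /=; apply: eq_bigr => x _; by rewrite exchange_big.
have IH' := IH (fun y => \sum_x \sum_b0 f x * G t0 x y b0) (t0 + 1).
cbv beta in IH'; rewrite IH'.
transitivity (\sum_y \sum_x \sum_b f x * G t0 x y b * bwv G (fun _ => 1) (t0 + 1) N y).
  apply: eq_bigr => y _; rewrite mulr_suml; apply: eq_bigr => x _; by rewrite mulr_suml.
rewrite exchange_big /=; apply: eq_bigr => x _; rewrite mulr_sumr; apply: eq_bigr => y _.
rewrite mulr_sumr; apply: eq_bigr => b _; by rewrite mulrA.

Qed.

End Path.

Import numFieldNormedType.Exports.

Section Filt.
Variables (R : realFieldType) (O : finType).

Definition GF (G : kern R O) (tt : int) (phi : O -> O -> bool -> bool) : kern R O :=
  fun t x y b => G t x y b * ((t == tt) ==> phi x y b)%:R.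

Lemma forall_prod n (P : 'I_n -> bool) : ([forall j, P j])%:R = \prod_(j < n) (P j)%:R :> R.
Proof.
case: (boolP [forall j, P j]) => [/forallP H|].
  by rewrite big1 // => j _; rewrite H.
rewrite negb_forall => /existsP[j Hj].
by rewrite (bigD1 j) //= (negbTE Hj) mul0r.
Qed.

Lemma filt_sum (G : kern R O) (tt : int) (phi : O -> O -> bool -> bool) (f : O -> R) (t0 : int) (N : nat) :
  \sum_(ob : {ffun 'I_N.+1 -> O} * {ffun 'I_N -> bool} |
      [forall j : 'I_N, (t0 + (j : nat)%:Z == tt) ==> phi (ob.1 (inord j)) (ob.1 (inord j.+1)) (ob.2 j)])
    f (ob.1 ord0) * \prod_(j < N) G (t0 + (j : nat)%:Z) (ob.1 (inord j)) (ob.1 (inord j.+1)) (ob.2 j)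
  = \sum_x f x * bwv (GF G tt phi) (fun _ => 1) t0 N x.
Proof.
rewrite -path_sum big_mkcond /=; apply: eq_bigr => ob _.
rewrite /GF big_split /=.
case: ifP => H.
  rewrite [X in _ = _ * (_ * X)]big1 ?mulr1 // => j _.
  move/forallP: H => /(_ j) H.
  by rewrite (_ : (_ ==> _) = true).
move/negbT: H; rewrite negb_forall => /existsP[j Hj].
rewrite [X in _ = _ * (_ * X)](bigD1 j) //=.
by rewrite (_ : (_ ==> _) = false) ?mul0r ?mulr0 //; apply/negbTE.
Qed.

Lemma GF_off G tt phi t : t != tt -> GF G tt phi t = G t.
Proof.
move=> ne; apply: funext => x; apply: funext => y; apply: funext => b.
by rewrite /GF (negbTE ne) mulr1.
Qed.

Lemma fb_filter (G : kern R O) (f : O -> R) (t0 : int) (m n : nat) phi tt :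
  tt = t0 + m%:Z ->
  \sum_x f x * bwv (GF G tt phi) (fun _ => 1) t0 (m + n.+1) x
  = \sum_x fw G f t0 m x * \sum_y \sum_b G tt x y b * (phi x y b)%:R * bwv G (fun _ => 1) (tt + 1) n y.
Proof.
move=> ett.
rewrite -fw_bw -ett.
rewrite (fw_congr (G' := G)); last first.
  move=> k km; apply: GF_off; rewrite ett; apply/negP => /eqP h.
  have : k = m by lia.
  by move=> ekm; rewrite ekm ltnn in km.
apply: eq_bigr => x _; congr (_ * _) => /=.
rewrite (bwv_congr (G' := G)); last first.
  by move=> k _; apply: GF_off; apply/negP => /eqP h; lia.
apply: eq_bigr => y _; apply: eq_bigr => b _; by rewrite /GF eqxx implyTb.
Qed.

Lemma fb_plain (G : kern R O) (f : O -> R) (t0 : int) (m n : nat) tt :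
  tt = t0 + m%:Z ->
  \sum_x f x * bwv G (fun _ => 1) t0 (m + n.+1) x
  = \sum_x fw G f t0 m x * \sum_y \sum_b G tt x y b * bwv G (fun _ => 1) (tt + 1) n y.
Proof. by move=> ett; rewrite -fw_bw -ett. Qed.

Lemma ind_g (F : O -> bool -> R) (o' : O) (b' : bool) :
  \sum_y \sum_b F y b * ((y == o') && (b == b'))%:R = F o' b'.
Proof.
rewrite (bigD1 o') //=.
rewrite [X in _ + X]big1 ?addr0; last first.
  move=> y /negbTE ne; apply: big1 => b _; by rewrite ne mulr0.
rewrite (bigD1 b') //= !eqxx mulr1 big1 ?addr0 // => b hb.
by rewrite (negbTE hb) mulr0.
Qed.

Lemma ind_t (F : O -> bool -> R) (x o' : O) (b' : bool) :
  \sum_y \sum_b F y b * ((x == o') && (b == b'))%:R = (x == o')%:R * \sum_y F y b'.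
Proof.
rewrite mulr_sumr; apply: eq_bigr => y _.
rewrite (bigD1 b') //= big1 ?addr0; last first.
  by move=> b /negbTE ne; rewrite ne andbF mulr0.
by rewrite eqxx andbT mulrC.
Qed.

Lemma fb_filter' (G : kern R O) (f : O -> R) (t0 : int) (N m n : nat) phi tt :
  N = (m + n.+1)%N -> tt = t0 + m%:Z ->
  \sum_x f x * bwv (GF G tt phi) (fun _ => 1) t0 N x
  = \sum_x fw G f t0 m x * \sum_y \sum_b G tt x y b * bwv G (fun _ => 1) (tt + 1) n y * (phi x y b)%:R.
Proof.
move=> -> ett; rewrite (fb_filter _ _ _ _ ett); apply: eq_bigr => x _; congr (_ * _).
apply: eq_bigr => y _; apply: eq_bigr => b _; by rewrite mulrAC.
Qed.

Lemma num_g (G : kern R O) (f : O -> R) (t0 : int) (N m n : nat) (tt : int) (o' : O) (b' : bool) :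
  N = (m + n.+1)%N -> tt = t0 + m%:Z ->
  \sum_x f x * bwv (GF G tt (fun x y b => (y == o') && (b == b'))) (fun _ => 1) t0 N x
  = \sum_x fw G f t0 m x * (G tt x o' b' * bwv G (fun _ => 1) (tt + 1) n o').
Proof.
move=> eN ett; rewrite (@fb_filter' G f t0 N m n _ tt eN ett); apply: eq_bigr => x _.
by rewrite (ind_g (fun y b => G tt x y b * bwv G (fun _ => 1) (tt + 1) n y)).
Qed.

Lemma num_t (G : kern R O) (f : O -> R) (t0 : int) (N m n : nat) (tt : int) (o' : O) (b' : bool) :
  N = (m + n.+1)%N -> tt = t0 + m%:Z ->
  \sum_x f x * bwv (GF G tt (fun x y b => (x == o') && (b == b'))) (fun _ => 1) t0 N x
  = fw G f t0 m o' * \sum_y G tt o' y b' * bwv G (fun _ => 1) (tt + 1) n y.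
Proof.
move=> eN ett; rewrite (@fb_filter' G f t0 N m n _ tt eN ett).
under eq_bigr => x _ do rewrite (ind_t (fun y b => G tt x y b * bwv G (fun _ => 1) (tt + 1) n y)).
rewrite (bigD1 o') //= eqxx mul1r [X in _ + X]big1 ?addr0 // => x /negbTE ->.
by rewrite mul0r mulr0.
Qed.

End Filt.


Section Conn.
Variables (R : realType) (St A O : finType) (nh nl nb : nat).
Variables (pihi : 'rV[R]_nh -> St -> O -> R) (pilo : 'rV[R]_nl -> St -> O -> A -> R)
          (pib : 'rV[R]_nb -> St -> O -> bool -> R) (P : St -> A -> St -> R) (zeta : R).
Variables (s : int -> St) (a : int -> A).
Hypothesis HPpos : forall t : int, 0 < P (s t) (a t) (s (t + 1)).

Definition Gth (th : param R nh nl nb) : kern R O :=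
  fun t x y b => hfun pihi pilo pib zeta th x (s t) (a t) y b.

Lemma divMr' (x y p : R) : p != 0 -> (x * p) / (y * p) = x / y.
Proof. by move=> p0; rewrite invfM mulrACA divff // mulr1. Qed.

Lemma smooth_gen th init t0 N t o' b' :
  smooth pihi pilo pib P zeta th init t0 N s a t o' b'
  = (\sum_x init x * bwv (GF (Gth th) t (fun x y b => (y == o') && (b == b'))) (fun _ => 1) t0 N x)
    / (\sum_x init x * bwv (Gth th) (fun _ => 1) t0 N x).
Proof.
rewrite /smooth /wpath -!mulr_suml.
rewrite (filt_sum (Gth th) t (fun x y b => (y == o') && (b == b'))).
rewrite (path_sum (Gth th)).
apply: divMr'; rewrite gt_eqF //; apply: prodr_gt0 => j _; exact: HPpos.
Qed.

Lemma smootht_gen th init t0 N t o' b' :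
  smooth_tilde pihi pilo pib P zeta th init t0 N s a t o' b'
  = (\sum_x init x * bwv (GF (Gth th) t (fun x y b => (x == o') && (b == b'))) (fun _ => 1) t0 N x)
    / (\sum_x init x * bwv (Gth th) (fun _ => 1) t0 N x).
Proof.
rewrite /smooth_tilde /wpath -!mulr_suml.
rewrite (filt_sum (Gth th) t (fun x y b => (x == o') && (b == b'))).
rewrite (path_sum (Gth th)).
apply: divMr'; rewrite gt_eqF //; apply: prodr_gt0 => j _; exact: HPpos.
Qed.

Variable T : nat.

Lemma gamma_mu_eq th mu i o' b' : (i < T)%N ->
  gamma_mu pihi pilo pib P zeta th mu T s a (i.+1)%:Z o' b'
  = gm T (Sys (Gth th) (mu (s 1)) (fun _ => 1)) i o' b'.
Proof.
move=> iT; rewrite /gamma_mu smooth_gen.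
rewrite (@num_g _ _ (Gth th) (mu (s 1)) 1 T i (T - i.+1) (i.+1)%:Z o' b'); [|lia|lia].
rewrite /gm /Zs /Wt /al /be subn0 /=.
have e : (i.+1)%:Z + 1 = (i.+2)%:Z by lia.
rewrite e; congr (_ / _); apply: eq_bigr => x _; by rewrite mulrA.
Qed.

Lemma gammat_mu_eq th mu i o' b' : (i < T)%N ->
  gammat_mu pihi pilo pib P zeta th mu T s a (i.+1)%:Z o' b'
  = tm T (Sys (Gth th) (mu (s 1)) (fun _ => 1)) i o' b'.
Proof.
move=> iT; rewrite /gammat_mu smootht_gen.
rewrite (@num_t _ _ (Gth th) (mu (s 1)) 1 T i (T - i.+1) (i.+1)%:Z o' b'); [|lia|lia].
rewrite /tm /Zs /Wt /al /be subn0 /=.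
have e : (i.+1)%:Z + 1 = (i.+2)%:Z by lia.
rewrite e mulr_sumr; congr (_ / _); apply: eq_bigr => y _; by rewrite mulrA.
Qed.

Definition uk th (nu : O -> St -> R) (k : nat) :=
  fw (Gth th) (fun o => nu o (s (1 - k%:Z))) (1 - k%:Z) k.
Definition vk th (k : nat) := bwv (Gth th) (fun _ => 1) (T.+1)%:Z k.

Lemma den_k th nu k :
  \sum_x nu x (s (1 - k%:Z)) * bwv (Gth th) (fun _ => 1) (1 - k%:Z) (T + 2 * k) x
  = Zs T (Sys (Gth th) (uk th nu k) (vk th k)).
Proof.
rewrite (_ : (T + 2 * k)%N = (k + (T + k))%N); last by lia.
rewrite -fw_bw subrK bw_split /Zs /al /be subn0 /= /uk /vk.
by rewrite -intS.
Qed.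

Lemma gamma_k_eq th nu k i o' b' : (i < T)%N ->
  gamma_k pihi pilo pib P zeta th nu k T s a (i.+1)%:Z o' b'
  = gm T (Sys (Gth th) (uk th nu k) (vk th k)) i o' b'.
Proof.
move=> iT; rewrite /gamma_k smooth_gen den_k.
rewrite (@num_g _ _ (Gth th) _ (1 - k%:Z) (T + 2 * k) (k + i) (T - i.+1 + k) (i.+1)%:Z o' b'); [|lia|lia].
rewrite fw_split subrK bw_split.
have e1 : (i.+1)%:Z + 1 + (T - i.+1)%:Z = (T.+1)%:Z by lia.
have e2 : (i.+1)%:Z + 1 = (i.+2)%:Z by lia.
rewrite e1 e2 /gm /Wt /al /be /uk /vk /=.
congr (_ / _); apply: eq_bigr => x _; by rewrite mulrA.
Qed.

Lemma gammat_k_eq th nu k i o' b' : (i < T)%N ->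
  gammat_k pihi pilo pib P zeta th nu k T s a (i.+1)%:Z o' b'
  = tm T (Sys (Gth th) (uk th nu k) (vk th k)) i o' b'.
Proof.
move=> iT; rewrite /gammat_k smootht_gen den_k.
rewrite (@num_t _ _ (Gth th) _ (1 - k%:Z) (T + 2 * k) (k + i) (T - i.+1 + k) (i.+1)%:Z o' b'); [|lia|lia].
rewrite fw_split subrK bw_split.
have e1 : (i.+1)%:Z + 1 + (T - i.+1)%:Z = (T.+1)%:Z by lia.
have e2 : (i.+1)%:Z + 1 = (i.+2)%:Z by lia.
rewrite e1 e2 /tm /Wt /al /be /uk /vk /= mulr_sumr.
congr (_ / _); apply: eq_bigr => y _; by rewrite mulrA.
Qed.

End Conn.


Lemma dist2_self (R : realType) nh nl nb (th : param R nh nl nb) : dist2 th th = 0.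
Proof.
rewrite /dist2 !big1 ?addr0 ?sqrtr0 // => i _; by rewrite subrr expr0n.
Qed.


Local Open Scope classical_set_scope.
Local Open Scope ring_scope.
Theorem lemma12 (R : realType) (S A O : finType) (nh nl nb : nat)
  (Th : set 'rV[R]_nh) (Tl : set 'rV[R]_nl) (Tb : set 'rV[R]_nb)
  (pihi : 'rV[R]_nh -> S -> O -> R) (pilo : 'rV[R]_nl -> S -> O -> A -> R)
  (pib : 'rV[R]_nb -> S -> O -> bool -> R) (P : S -> A -> S -> R)
  (zeta epsb : R) (thstar : param R nh nl nb) (nustar : O -> S -> R)
  (* Theta = Th x Tl x Tb convex compact *)
  (HTh : compact Th /\ convex_rv Th) (HTl : compact Tl /\ convex_rv Tl)
  (HTb : compact Tb /\ convex_rv Tb)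
  (* standing assumption (i) *)
  (Hhi : exists U : set 'rV[R]_nh, open U /\ Th `<=` U /\
     (forall x, U x -> forall s, (forall o, 0 < pihi x s o) /\ \sum_(o : O) pihi x s o = 1) /\
     (forall s o, C1_on U (fun x => pihi x s o)))
  (Hlo : exists U : set 'rV[R]_nl, open U /\ Tl `<=` U /\
     (forall x, U x -> forall s o, (forall a, 0 < pilo x s o a) /\ \sum_(a : A) pilo x s o a = 1) /\
     (forall s o a, C1_on U (fun x => pilo x s o a)))
  (Hb : exists U : set 'rV[R]_nb, open U /\ Tb `<=` U /\
     (forall x, U x -> forall s o, (forall b, 0 < pib x s o b) /\ \sum_(b : bool) pib x s o b = 1) /\
     (forall s o b, C1_on U (fun x => pib x s o b)))
  (HP : (forall s a s', 0 <= P s a s') /\ (forall s a, \sum_(s' : S) P s a s' = 1))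
  (Hzeta : 0 < zeta < 1)
  (* standing assumption (ii) *)
  (Hthstar : inTheta Th Tl Tb thstar)
  (Hnustar : extreme_stationary pihi pilo pib P zeta thstar nustar)
  (* the constant eps_b *)
  (Heps : 0 < epsb /\
     exists pbar : param R nh nl nb -> S -> O -> bool -> R,
       forall th, inTheta Th Tl Tb th -> forall s,
         (forall o b, 0 <= pbar th s o b) /\ \sum_(x : O * bool) pbar th s x.1 x.2 = 1 /\
         forall oprev o b,
           0 < epsb * zeta * pbar th s o b /\
           epsb * zeta * pbar th s o b
             <= pib (th_b th) s oprev b * pibar_hi pihi zeta (th_hi th) s oprev b o /\
           pib (th_b th) s oprev b * pibar_hi pihi zeta (th_hi th) s oprev b o
             <= epsb^-1 * #|O|%:R * pbar th s o b)
  (th th' : param R nh nl nb) (k : nat) (mu : S -> O -> R) (T : nat)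
  (s : int -> S) (a : int -> A) (L : R)
  (Hth : inTheta Th Tl Tb th) (Hth' : inTheta Th Tl Tb th')
  (Hk : (0 < k)%N)
  (Hmu : forall s1, (forall o, 0 <= mu s1 o) /\ \sum_(o : O) mu s1 o = 1)
  (HT : (2 <= T)%N)
  (* (s_t, a_t)_t is the observation sequence of some omega in Omega *)
  (Homega : forall t : int, 0 < P (s t) (a t) (s (t + 1)))
  (* the conditioning event of gamma^{th'}_{k,.} has positive probability *)
  (Hpos : 0 < \sum_(o : O) nustar o (s (1 - k%:Z)))
  (* L = L_{th, ||th' - th||_2} *)
  (HL : is_L_const pihi pilo pib zeta Th Tl Tb th (dist2 th' th) L) :
  let c := epsb ^+ 2 * zeta / #|O|%:R in
  (forall t : nat, (1 <= t <= T)%N ->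
     tv (gamma_mu pihi pilo pib P zeta th mu T s a t%:Z)
        (gamma_k pihi pilo pib P zeta th' nustar k T s a t%:Z)
     <= (1 - c) ^+ (t - 1) + (1 - c) ^+ (T - t)
        + 2 * #|O|%:R * zconst pihi pilo pib zeta th th' * L / (epsb ^+ 2 * zeta)
          * dist2 th' th) /\
  (forall t : nat, (2 <= t <= T)%N ->
     tv (gammat_mu pihi pilo pib P zeta th mu T s a t%:Z)
        (gammat_k pihi pilo pib P zeta th' nustar k T s a t%:Z)
     <= 2 * (1 - c) ^+ (t - 2) + (1 - c) ^+ (T - t)
        + 4 * #|O|%:R * zconst pihi pilo pib zeta th th' * L / (epsb ^+ 2 * zeta)
          * dist2 th' th).
Proof.
move=> c.
have [eps0 [pbar Hpbar]] := Heps.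
have [Ul [_ [TlU [Hlo' _]]]] := Hlo.
have [z0 z1] := andP Hzeta.
have [oz _] : exists o : O, true.
  have [_ h] := Hmu (s 1).
  case: (pickP (fun x : O => true)) => [x _|H]; first by exists x.
  move: h; rewrite big_pred0; last by move=> x; rewrite H.
  by move/eqP; rewrite eq_sym oner_eq0.
have cO : (0 < #|O|)%N by apply/card_gt0P; exists oz.
have Oc : 0 < (#|O|%:R : R) by rewrite ltr0n.
have c0 : 0 < c by rewrite /c !mulr_gt0 ?exprn_gt0 ?invr_gt0.
have SandTh : forall th0, inTheta Th Tl Tb th0 -> Sand c (Gth pihi pilo pib zeta s a th0).
  move=> th0 Hth0 t.
  have [hp1 [hp2 hp3]] := Hpbar th0 Hth0 (s t).
  have plp : forall y, 0 < pilo (th_lo th0) (s t) y (a t).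
    by move=> y; have [h _] := Hlo' (th_lo th0) (TlU _ Hth0.2.1) (s t) y; apply: h.
  exists (fun y b => epsb^-1 * #|O|%:R * pbar th0 (s t) y b * pilo (th_lo th0) (s t) y (a t)).
  split.
    move=> y b; have [h1 _] := hp3 y y b.
    have pb : 0 < pbar th0 (s t) y b.
      by move: h1; rewrite pmulr_rgt0 // mulr_gt0.
    by rewrite !mulr_gt0 // invr_gt0.
  move=> x y b; have [h1 [h2 h3]] := hp3 x y b.
  rewrite /Gth /hfun.
  have ec : c * (epsb^-1 * #|O|%:R * pbar th0 (s t) y b * pilo (th_lo th0) (s t) y (a t))
         = epsb * zeta * pbar th0 (s t) y b * pilo (th_lo th0) (s t) y (a t).
    by rewrite /c; field; rewrite !gt_eqF.
  rewrite ec; split; (apply: ler_wpM2r; first exact: ltW); by [].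
set G := Gth pihi pilo pib zeta s a th.
set G' := Gth pihi pilo pib zeta s a th'.
have SG := SandTh th Hth.
have SG' := SandTh th' Hth'.
have c1 : c <= 1.
  have [q [qp Hq]] := SG 0.
  have [h1 h2] := Hq oz oz true.
  have : c * q oz true <= 1 * q oz true by rewrite mul1r; exact: le_trans h1 h2.
  by rewrite ler_pM2r.
have GP := Sand_pos c0 SG.
have GP' := Sand_pos c0 SG'.
have hmaxP : forall th0 sx ax x y b,
    hfun pihi pilo pib zeta th0 x sx ax y b <= hmax pihi pilo pib zeta th0 sx ax.
  move=> th0 sx ax x y b; rewrite /hmax.
  exact: (le_bigmax _ (fun p : O * O * bool => hfun pihi pilo pib zeta th0 p.1.1 sx ax p.1.2 p.2) (x, y, b)).
have hminP : forall th0 sx ax x y b,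
    hmin pihi pilo pib zeta th0 sx ax <= hfun pihi pilo pib zeta th0 x sx ax y b.
  move=> th0 sx ax x y b; rewrite /hmin.
  exact: (bigmin_le _ (x, y, b) (fun p : O * O * bool => hfun pihi pilo pib zeta th0 p.1.1 sx ax p.1.2 p.2)).
have hminpos : forall th0 t, inTheta Th Tl Tb th0 -> 0 < hmin pihi pilo pib zeta th0 (s t) (a t).
  move=> th0 t H0; have GP0 := Sand_pos c0 (SandTh th0 H0).
  rewrite /hmin; apply: (big_ind (fun v => 0 < v)).
  - exact: lt_le_trans (GP0 t oz oz true) (hmaxP th0 (s t) (a t) oz oz true).
  - by move=> x y hx hy; rewrite lt_min hx hy.
  - move=> p _; exact: GP0.
set d := dist2 th' th.
have d0 : 0 <= d by rewrite /d /dist2 sqrtr_ge0.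
have [[L0 Lip] _] := HL.
have zc0 : 0 <= zconst pihi pilo pib zeta th th' by rewrite /zconst; exact: bigmax_ge_id.
set e := zconst pihi pilo pib zeta th th' * L * d.
have e0 : 0 <= e by rewrite /e !mulr_ge0.
have close : forall t, exists rho kap, [/\ 0 < kap, rho <= e * kap,
      (forall x y b, `|G' t x y b - G t x y b| <= rho * G t x y b) &
      (forall x y b, kap * G t x y b <= G' t x y b)].
  move=> t.
  set hm := hmin pihi pilo pib zeta th (s t) (a t).
  set hm' := hmin pihi pilo pib zeta th' (s t) (a t).
  set hM := hmax pihi pilo pib zeta th (s t) (a t).
  have hmp : 0 < hm := hminpos th t Hth.
  have hmp' : 0 < hm' := hminpos th' t Hth'.
  have hMp : 0 < hM := lt_le_trans (GP t oz oz true) (hmaxP th (s t) (a t) oz oz true).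
  exists (L * d / hm), (hm' / hM); split.
  - by rewrite divr_gt0.
  - have zr : hM / (hm * hm') <= zconst pihi pilo pib zeta th th'.
      apply: le_trans _ (le_bigmax _ (fun p : S * A => Num.max (hmax pihi pilo pib zeta th p.1 p.2)
          (hmax pihi pilo pib zeta th' p.1 p.2) / (hmin pihi pilo pib zeta th p.1 p.2 * hmin pihi pilo pib zeta th' p.1 p.2)) (s t, a t)).
      rewrite /=; apply: ler_wpM2r; first by rewrite invr_ge0 ltW // mulr_gt0.
      by rewrite le_max lexx.
    rewrite (_ : L * d / hm = (L * d * (hM / (hm * hm'))) * (hm' / hM)); last first.
      by field; rewrite !gt_eqF.
    apply: ler_wpM2r; first by rewrite divr_ge0 // ltW.
    rewrite /e (_ : zconst pihi pilo pib zeta th th' * L * d = L * d * zconst pihi pilo pib zeta th th'); last by ring.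
    apply: ler_wpM2l => //; exact: mulr_ge0.
  - move=> x y b.
    have hl := Lip x (s t) (a t) y b th' th Hth' Hth (lexx d) (ltac:(by rewrite dist2_self)).
    have hge : hm <= G t x y b := hminP th (s t) (a t) x y b.
    apply: le_trans hl _.
    have -> : L * d / hm * G t x y b = L * d * (G t x y b / hm) by ring.
    rewrite -[X in X <= _]mulr1; apply: ler_wpM2l; first exact: mulr_ge0.
    by rewrite ler_pdivlMr // mul1r.
  - move=> x y b.
    have h1 : hm' / hM * G t x y b <= hm' / hM * hM.
      apply: ler_wpM2l; first by rewrite divr_ge0 // ltW.
      exact: hmaxP.
    apply: le_trans h1 _; rewrite divfK ?gt_eqF //.
    exact: hminP.
have mu0 : forall x, 0 <= mu (s 1) x by move=> x; have [h _] := Hmu (s 1); exact: h.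
have mup : 0 < \sum_x mu (s 1) x by have [_ ->] := Hmu (s 1); exact: ltr01.
have nu0 : forall o, 0 <= nustar o (s (1 - k%:Z)).
  by move=> o; have [[h _] _] := Hnustar; exact: h.
have u'0 : forall x, 0 <= uk pihi pilo pib zeta s a th' nustar k x.
  by move=> x; rewrite /uk; apply: fw_ge0.
have u'p : 0 < \sum_x uk pihi pilo pib zeta s a th' nustar k x.
  by rewrite /uk; apply: fw_sum_gt0.
have v'p : forall x, 0 < vk pihi pilo pib zeta s a T th' k x.
  by move=> x; rewrite /vk; apply: bwv_gt0.
have AM := abstract_main (T := T) c0 c1 SG SG' mu0 mup (fun _ => ltr01) u'0 u'p v'p e0 close.
have eg : 2 * #|O|%:R * zconst pihi pilo pib zeta th th' * L / (epsb ^+ 2 * zeta) * d = 2 * e / c.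
  by rewrite /e /c; field; rewrite !gt_eqF.
have et : 4 * #|O|%:R * zconst pihi pilo pib zeta th th' * L / (epsb ^+ 2 * zeta) * d = 4 * e / c.
  by rewrite /e /c; field; rewrite !gt_eqF.
split => t /andP[t1 tT]; case: t t1 tT => [//|i] t1 iT.
  have [AMg _] := AM i iT.
  have -> : tv (gamma_mu pihi pilo pib P zeta th mu T s a (i.+1)%:Z)
              (gamma_k pihi pilo pib P zeta th' nustar k T s a (i.+1)%:Z)
           = tvg T (Sys G (mu (s 1)) (fun _ => 1))
                   (Sys G' (uk pihi pilo pib zeta s a th' nustar k) (vk pihi pilo pib zeta s a T th' k)) i.
    rewrite /tv /tvg sum2; congr (_ * _); apply: eq_bigr => y _; apply: eq_bigr => b _ /=.
    by rewrite (gamma_mu_eq pihi pilo pib zeta Homega th mu y b iT) (gamma_k_eq pihi pilo pib zeta Homega th' nustar k y b iT).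
  by rewrite subn1 /= eg.
have [_ AMt] := AM i iT.
have -> : tv (gammat_mu pihi pilo pib P zeta th mu T s a (i.+1)%:Z)
            (gammat_k pihi pilo pib P zeta th' nustar k T s a (i.+1)%:Z)
         = tvt T (Sys G (mu (s 1)) (fun _ => 1))
                 (Sys G' (uk pihi pilo pib zeta s a th' nustar k) (vk pihi pilo pib zeta s a T th' k)) i.
  rewrite /tv /tvt sum2; congr (_ * _); apply: eq_bigr => y _; apply: eq_bigr => b _ /=.
  by rewrite (gammat_mu_eq pihi pilo pib zeta Homega th mu y b iT) (gammat_k_eq pihi pilo pib zeta Homega th' nustar k y b iT).
rewrite et; apply: le_trans AMt _.
apply: lerD => //; apply: lerD => //.
case: i iT t1 => [//|j] _ _.
have x0 : 0 <= 1 - c by rewrite subr_ge0.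
have x1 : 1 - c <= 1 by rewrite lerBlDr lerDl ltW.
rewrite subSS subn1 /= exprS.
have hx : 0 <= (1 - c) ^+ j by exact: exprn_ge0.
nra.
Qed.
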